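(* Under the assumptions and notation of the context, there exist a neighborhood $\mathcal U$ of $(0,0)$ and $C>0$ such that on $\mathcal U\cap\{t>0\}$ the entries of $\mathcal A=(\tilde a_{ij})$ and of $\partial_x\mathcal A$ satisfy (with $|O(g)|\le C g$ entrywise) \[ \mathcal A=\begin{bmatrix}O(\sqrt a)&O(1)&O(\sqrt a)\\O(a)&O(\sqrt a)&O(1)\\O(a^{3/2})&O(a)&O(a^{5/2})\end{bmatrix},\qquad \partial_x\mathcal A=\begin{bmatrix}O(1)&O(1/\sqrt a)&O(1)\\O(\sqrt a)&O(1)&O(1/\sqrt a)\\O(a)&O(\sqrt a)&O(\sqrt a)\end{bmatrix}. \]
   Context: Let $W\subset\mathbb R$ be an open interval containing $0$, $c,T>0$, and let $a(t,x),b(t,x)$ be real-valued $C^\infty$ functions on $(-c,T)\times W$ with bounded derivatives of all orders. Assume $\Delta:=4a^3-27b^2\ge0$ on $[0,T)\times W$, $a(0,0)=0$, and $a>0$ on $(0,T)\times W$. Let $S=\begin{bmatrix}3&0&-a\\0&2a&3b\\-a&3b&a^2\end{bmatrix}$, $A=\begin{bmatrix}0&a&b\\1&0&0\\0&1&0\end{bmatrix}$, and let $\lambda_1<\lambda_2<\lambda_3$ be the eigenvalues of $S$ on $\mathcal U\cap\{t>0\}$ for a small neighborhood $\mathcal U$ of $(0,0)$. Define vectors $\ell_j=(\ell_{1j},\ell_{2j},\ell_{3j})^t$ by $\ell_1=\big(a(2a-\lambda_1),\ 3b(\lambda_1-3),\ (\lambda_1-3)(\lambda_1-2a)\big)^t$,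 $\ell_2=\big(-3ab,\ (\lambda_2-3)(\lambda_2-a^2)-a^2,\ 3b(\lambda_2-3)\big)^t$, $\ell_3=\big((\lambda_3-2a)(\lambda_3-a^2)-9b^2,\ -3ab,\ -a(\lambda_3-2a)\big)^t$ (eigenvectors of $S$ for $\lambda_1,\lambda_2,\lambda_3$), let $\mathbf t_j=\ell_j/|\ell_j|$, and let $T=(\mathbf t_1,\mathbf t_2,\mathbf t_3)$, an orthogonal matrix with $T^{-1}ST=\mathrm{diag}(\lambda_1,\lambda_2,\lambda_3)$. Set $\mathcal A=T^{-1}AT$. *)

(* Defs.v *)
From Stdlib Require Import Reals.
From Coquelicot Require Import Coquelicot.
Open Scope R_scope.

(* 3x3 matrices and 3-vectors, indexed by 0,1,2 (paper's indices 1,2,3). *)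
Definition Mat := nat -> nat -> R.
Definition Vec := nat -> R.

Definition mk3 (m00 m01 m02 m10 m11 m12 m20 m21 m22 : R) : Mat :=
  fun i j => match i, j with
  | 0%nat, 0%nat => m00 | 0%nat, 1%nat => m01 | 0%nat, 2%nat => m02
  | 1%nat, 0%nat => m10 | 1%nat, 1%nat => m11 | 1%nat, 2%nat => m12
  | 2%nat, 0%nat => m20 | 2%nat, 1%nat => m21 | 2%nat, 2%nat => m22
  | _, _ => 0 end.

Definition mkv (v0 v1 v2 : R) : Vec :=
  fun i => match i with 0%nat => v0 | 1%nat => v1 | 2%nat => v2 | _ => 0 end.

Definition matS (a b : R) : Mat := mk3 3 0 (-a) 0 (2*a) (3*b) (-a) (3*b) (a^2).
Definition matA (a b : R) : Mat := mk3 0 a b 1 0 0 0 1 0.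

Definition mulmv (M : Mat) (v : Vec) : Vec :=
  fun i => M i 0%nat * v 0%nat + M i 1%nat * v 1%nat + M i 2%nat * v 2%nat.
Definition mulmm (M N : Mat) : Mat :=
  fun i j => M i 0%nat * N 0%nat j + M i 1%nat * N 1%nat j + M i 2%nat * N 2%nat j.

Definition is_eigenvalue (M : Mat) (lam : R) : Prop :=
  exists v : Vec, (v 0%nat <> 0 \/ v 1%nat <> 0 \/ v 2%nat <> 0) /\
    forall i, (i < 3)%nat -> mulmv M v i = lam * v i.

Definition det3 (M : Mat) : R :=
  M 0%nat 0%nat * (M 1%nat 1%nat * M 2%nat 2%nat - M 1%nat 2%nat * M 2%nat 1%nat)
  - M 0%nat 1%nat * (M 1%nat 0%nat * M 2%nat 2%nat - M 1%nat 2%nat * M 2%nat 0%nat)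
  + M 0%nat 2%nat * (M 1%nat 0%nat * M 2%nat 1%nat - M 1%nat 1%nat * M 2%nat 0%nat).
(* cofactor C_{ij} of a 3x3 matrix (cyclic formula) *)
Definition cof3 (M : Mat) (i j : nat) : R :=
  M ((i+1) mod 3)%nat ((j+1) mod 3)%nat * M ((i+2) mod 3)%nat ((j+2) mod 3)%nat
  - M ((i+1) mod 3)%nat ((j+2) mod 3)%nat * M ((i+2) mod 3)%nat ((j+1) mod 3)%nat.
Definition inv3 (M : Mat) : Mat := fun i j => cof3 M j i / det3 M.

(* the eigenvectors l_1, l_2, l_3 of the paper *)
Definition ell1 (a b l : R) : Vec :=
  mkv (a * (2*a - l)) (3*b*(l - 3)) ((l - 3) * (l - 2*a)).
Definition ell2 (a b l : R) : Vec :=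
  mkv (-(3*a*b)) ((l - 3) * (l - a^2) - a^2) (3*b*(l - 3)).
Definition ell3 (a b l : R) : Vec :=
  mkv ((l - 2*a) * (l - a^2) - 9*b^2) (-(3*a*b)) (-(a*(l - 2*a))).

Definition vnorm (v : Vec) : R := sqrt (v 0%nat ^ 2 + v 1%nat ^ 2 + v 2%nat ^ 2).
Definition normalize (v : Vec) : Vec := fun i => v i / vnorm v.

Definition matT (a b l1 l2 l3 : R) : Mat :=
  fun i j => match j with
  | 0%nat => normalize (ell1 a b l1) i
  | 1%nat => normalize (ell2 a b l2) i
  | 2%nat => normalize (ell3 a b l3) i
  | _ => 0 end.

Definition calA (a b l1 l2 l3 : R) : Mat :=
  let T := matT a b l1 l2 l3 in mulmm (inv3 T) (mulmm (matA a b) T).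

(* f is C^infinity with bounded partial derivatives of all orders on the open
   set D: F i j is the partial derivative d_t^i d_x^j f. *)
Definition smooth_bdd (D : R -> R -> Prop) (f : R -> R -> R) : Prop :=
  exists F : nat -> nat -> R -> R -> R,
    (forall t x, D t x -> F 0%nat 0%nat t x = f t x) /\
    (forall i j t x, D t x ->
       is_derive (fun s => F i j s x) t (F (S i) j t x) /\
       is_derive (fun y => F i j t y) x (F i (S j) t x)) /\
    (forall i j, exists M, forall t x, D t x -> Rabs (F i j t x) <= M).

(* gauge functions for the O(.) bounds on calA and d_x calA, as functions of a *)
Definition gaugeA (s : R) : Mat :=
  mk3 (sqrt s) 1 (sqrt s)
      s (sqrt s) 1
      (s * sqrt s) s (s^2 * sqrt s).
Definition gaugedA (s : R) : Mat :=
  mk3 1 (/ sqrt s) 1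
      (sqrt s) 1 (/ sqrt s)
      s (sqrt s) (sqrt s).

(* Main.v *)
Require Import Defs.
From Stdlib Require Import Reals Lra Psatz.
From Coquelicot Require Import Coquelicot.
Open Scope R_scope.

Definition pc (a b l : R) : R :=
  l^3 - (3+2*a+a^2)*l^2 + (6*a+2*a^2+2*a^3-9*b^2)*l - (4*a^3-27*b^2).

Lemma eig_root a b l : is_eigenvalue (matS a b) l -> pc a b l = 0.
Proof.
  intros [v [Hv He]].
  pose proof (He 0%nat ltac:(lia)) as E0.
  pose proof (He 1%nat ltac:(lia)) as E1.
  pose proof (He 2%nat ltac:(lia)) as E2.
  unfold mulmv, matS, mk3 in E0, E1, E2. simpl in E0, E1, E2.
  set (v0 := v 0%nat) in *. set (v1 := v 1%nat) in *. set (v2 := v 2%nat) in *.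
  set (e0 := 3*v0 + 0*v1 + -a*v2 - l*v0).
  set (e1 := 0*v0 + 2*a*v1 + 3*b*v2 - l*v1).
  set (e2 := -a*v0 + 3*b*v1 + a^2*v2 - l*v2).
  assert (z0 : e0 = 0) by (unfold e0; lra).
  assert (z1 : e1 = 0) by (unfold e1; lra).
  assert (z2 : e2 = 0) by (unfold e2; lra).
  set (m00 := 3 - l). set (m01 := 0). set (m02 := -a).
  set (m10 := 0). set (m11 := 2*a - l). set (m12 := 3*b).
  set (m20 := -a). set (m21 := 3*b). set (m22 := a^2 - l).
  assert (Hd : - pc a b l = m00*(m11*m22-m12*m21) - m01*(m10*m22-m12*m20) + m02*(m10*m21-m11*m20))
    by (unfold pc, m00, m01, m02, m10, m11, m12, m20, m21, m22; ring).
  assert (A0 : - pc a b l * v0 = (m11*m22 - m12*m21)*e0 + (m02*m21 - m01*m22)*e1 + (m01*m12 - m02*m11)*e2)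
    by (rewrite Hd; unfold e0,e1,e2,m00, m01, m02, m10, m11, m12, m20, m21, m22; ring).
  assert (A1 : - pc a b l * v1 = (m12*m20 - m10*m22)*e0 + (m00*m22 - m02*m20)*e1 + (m02*m10 - m00*m12)*e2)
    by (rewrite Hd; unfold e0,e1,e2,m00, m01, m02, m10, m11, m12, m20, m21, m22; ring).
  assert (A2 : - pc a b l * v2 = (m10*m21 - m11*m20)*e0 + (m01*m20 - m00*m21)*e1 + (m00*m11 - m01*m10)*e2)
    by (rewrite Hd; unfold e0,e1,e2,m00, m01, m02, m10, m11, m12, m20, m21, m22; ring).
  rewrite z0, z1, z2 in A0, A1, A2. ring_simplify in A0. ring_simplify in A1. ring_simplify in A2.
   destruct Hv as [H|[H|H]].
  - assert (pc a b l * v0 = 0) as A by lra; apply Rmult_integral in A; destruct A as [A|A]; [exact A| exfalso; apply H; exact A].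
  - assert (pc a b l * v1 = 0) as A by lra; apply Rmult_integral in A; destruct A as [A|A]; [exact A| exfalso; apply H; exact A].
  - assert (pc a b l * v2 = 0) as A by lra; apply Rmult_integral in A; destruct A as [A|A]; [exact A| exfalso; apply H; exact A].
Qed.

Definition Sv (a b : R) (v : Vec) (k : nat) : R := mulmv (matS a b) v k.

Lemma ell1_eig a b l k : pc a b l = 0 -> mulmv (matS a b) (ell1 a b l) k = l * ell1 a b l k.
Proof.
  intros H. unfold mulmv, matS, mk3, ell1, mkv.
  destruct k as [|[|[|k]]]; simpl; try ring.
  unfold pc in H. nra.
Qed.
Lemma ell2_eig a b l k : pc a b l = 0 -> mulmv (matS a b) (ell2 a b l) k = l * ell2 a b l k.
Proof.
  intros H. unfold mulmv, matS, mk3, ell2, mkv.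
  destruct k as [|[|[|k]]]; simpl; try ring; unfold pc in H; nra.
Qed.
Lemma ell3_eig a b l k : pc a b l = 0 -> mulmv (matS a b) (ell3 a b l) k = l * ell3 a b l k.
Proof.
  intros H. unfold mulmv, matS, mk3, ell3, mkv.
  destruct k as [|[|[|k]]]; simpl; try ring; unfold pc in H; nra.
Qed.

Definition gram (T : Mat) (i j : nat) : R :=
  T 0%nat i * T 0%nat j + T 1%nat i * T 1%nat j + T 2%nat i * T 2%nat j.

Lemma inv3_orth (T : Mat) :
  gram T 0 0 = 1 -> gram T 1 1 = 1 -> gram T 2 2 = 1 ->
  gram T 0 1 = 0 -> gram T 0 2 = 0 -> gram T 1 2 = 0 ->
  forall i j, (i < 3)%nat -> (j < 3)%nat -> inv3 T i j = T j i.
Proof.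
  unfold gram, inv3, cof3, det3.
  set (t00 := T 0%nat 0%nat). set (t01 := T 0%nat 1%nat). set (t02 := T 0%nat 2%nat).
  set (t10 := T 1%nat 0%nat). set (t11 := T 1%nat 1%nat). set (t12 := T 1%nat 2%nat).
  set (t20 := T 2%nat 0%nat). set (t21 := T 2%nat 1%nat). set (t22 := T 2%nat 2%nat).
  intros g00 g11 g22 g01 g02 g12.
  set (d := t00 * (t11 * t22 - t12 * t21) - t01 * (t10 * t22 - t12 * t20) + t02 * (t10 * t21 - t11 * t20)).
  assert (Hd2 : d * d = 1).
  { assert (d*d = (t00*t00+t10*t10+t20*t20)*((t01*t01+t11*t11+t21*t21)*(t02*t02+t12*t12+t22*t22)
       - (t01*t02+t11*t12+t21*t22)^2) - (t00*t01+t10*t11+t20*t21)*((t00*t01+t10*t11+t20*t21)*(t02*t02+t12*t12+t22*t22)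
       - (t01*t02+t11*t12+t21*t22)*(t00*t02+t10*t12+t20*t22)) + (t00*t02+t10*t12+t20*t22)*((t00*t01+t10*t11+t20*t21)*(t01*t02+t11*t12+t21*t22) - (t01*t01+t11*t11+t21*t21)*(t00*t02+t10*t12+t20*t22))) as E by (unfold d; ring).
    rewrite E, g00, g11, g22, g01, g02, g12. ring. }
  assert (dnz : d <> 0) by (intro; rewrite H in Hd2; lra).
  (* cofactor identities: cof_ji = d * t_ji *)
  intros i j Hi Hj.
  destruct i as [|[|[|i]]]; [| | |lia]; destruct j as [|[|[|j]]]; try lia; simpl; fold t00 t01 t02 t10 t11 t12 t20 t21 t22 d.
  - assert (E : (t11*t22 - t12*t21) - d*t00 = (1 - (t00*t00+t10*t10+t20*t20))*(t11*t22 - t12*t21) + (0 - (t00*t01+t10*t11+t20*t21))*(t12*t20 - t10*t22) + (0 - (t00*t02+t10*t12+t20*t22))*(t10*t21 - t11*t20)) by (unfold d; ring).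
    rewrite ?g00,?g11,?g22,?g01,?g02,?g12 in E.
    apply (Rmult_eq_reg_l d); auto. unfold Rdiv. rewrite Rmult_comm, Rmult_assoc, Rinv_l; auto. lra.
  - assert (E : (t21*t02 - t22*t01) - d*t10 = (1 - (t00*t00+t10*t10+t20*t20))*(t21*t02 - t22*t01) + (0 - (t00*t01+t10*t11+t20*t21))*(t22*t00 - t20*t02) + (0 - (t00*t02+t10*t12+t20*t22))*(t20*t01 - t21*t00)) by (unfold d; ring).
    rewrite ?g00,?g11,?g22,?g01,?g02,?g12 in E.
    apply (Rmult_eq_reg_l d); auto. unfold Rdiv. rewrite Rmult_comm, Rmult_assoc, Rinv_l; auto. lra.
  - assert (E : (t01*t12 - t02*t11) - d*t20 = (1 - (t00*t00+t10*t10+t20*t20))*(t01*t12 - t02*t11) + (0 - (t00*t01+t10*t11+t20*t21))*(t02*t10 - t00*t12) + (0 - (t00*t02+t10*t12+t20*t22))*(t00*t11 - t01*t10)) by (unfold d; ring).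
    rewrite ?g00,?g11,?g22,?g01,?g02,?g12 in E.
    apply (Rmult_eq_reg_l d); auto. unfold Rdiv. rewrite Rmult_comm, Rmult_assoc, Rinv_l; auto. lra.
  - assert (E : (t12*t20 - t10*t22) - d*t01 = (0 - (t00*t01+t10*t11+t20*t21))*(t11*t22 - t12*t21) + (1 - (t01*t01+t11*t11+t21*t21))*(t12*t20 - t10*t22) + (0 - (t01*t02+t11*t12+t21*t22))*(t10*t21 - t11*t20)) by (unfold d; ring).
    rewrite ?g00,?g11,?g22,?g01,?g02,?g12 in E.
    apply (Rmult_eq_reg_l d); auto. unfold Rdiv. rewrite Rmult_comm, Rmult_assoc, Rinv_l; auto. lra.
  - assert (E : (t22*t00 - t20*t02) - d*t11 = (0 - (t00*t01+t10*t11+t20*t21))*(t21*t02 - t22*t01) + (1 - (t01*t01+t11*t11+t21*t21))*(t22*t00 - t20*t02) + (0 - (t01*t02+t11*t12+t21*t22))*(t20*t01 - t21*t00)) by (unfold d; ring).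
    rewrite ?g00,?g11,?g22,?g01,?g02,?g12 in E.
    apply (Rmult_eq_reg_l d); auto. unfold Rdiv. rewrite Rmult_comm, Rmult_assoc, Rinv_l; auto. lra.
  - assert (E : (t02*t10 - t00*t12) - d*t21 = (0 - (t00*t01+t10*t11+t20*t21))*(t01*t12 - t02*t11) + (1 - (t01*t01+t11*t11+t21*t21))*(t02*t10 - t00*t12) + (0 - (t01*t02+t11*t12+t21*t22))*(t00*t11 - t01*t10)) by (unfold d; ring).
    rewrite ?g00,?g11,?g22,?g01,?g02,?g12 in E.
    apply (Rmult_eq_reg_l d); auto. unfold Rdiv. rewrite Rmult_comm, Rmult_assoc, Rinv_l; auto. lra.
  - assert (E : (t10*t21 - t11*t20) - d*t02 = (0 - (t00*t02+t10*t12+t20*t22))*(t11*t22 - t12*t21) + (0 - (t01*t02+t11*t12+t21*t22))*(t12*t20 - t10*t22) + (1 - (t02*t02+t12*t12+t22*t22))*(t10*t21 - t11*t20)) by (unfold d; ring).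
    rewrite ?g00,?g11,?g22,?g01,?g02,?g12 in E.
    apply (Rmult_eq_reg_l d); auto. unfold Rdiv. rewrite Rmult_comm, Rmult_assoc, Rinv_l; auto. lra.
  - assert (E : (t20*t01 - t21*t00) - d*t12 = (0 - (t00*t02+t10*t12+t20*t22))*(t21*t02 - t22*t01) + (0 - (t01*t02+t11*t12+t21*t22))*(t22*t00 - t20*t02) + (1 - (t02*t02+t12*t12+t22*t22))*(t20*t01 - t21*t00)) by (unfold d; ring).
    rewrite ?g00,?g11,?g22,?g01,?g02,?g12 in E.
    apply (Rmult_eq_reg_l d); auto. unfold Rdiv. rewrite Rmult_comm, Rmult_assoc, Rinv_l; auto. lra.
  - assert (E : (t00*t11 - t01*t10) - d*t22 = (0 - (t00*t02+t10*t12+t20*t22))*(t01*t12 - t02*t11) + (0 - (t01*t02+t11*t12+t21*t22))*(t02*t10 - t00*t12) + (1 - (t02*t02+t12*t12+t22*t22))*(t00*t11 - t01*t10)) by (unfold d; ring).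
    rewrite ?g00,?g11,?g22,?g01,?g02,?g12 in E.
    apply (Rmult_eq_reg_l d); auto. unfold Rdiv. rewrite Rmult_comm, Rmult_assoc, Rinv_l; auto. lra.
Qed.

Definition dot (u v : Vec) : R := u 0%nat * v 0%nat + u 1%nat * v 1%nat + u 2%nat * v 2%nat.

Lemma eig_orth a b (u v : Vec) li lj :
  (forall k, mulmv (matS a b) u k = li * u k) ->
  (forall k, mulmv (matS a b) v k = lj * v k) -> li <> lj -> dot u v = 0.
Proof.
  intros Hu Hv Hne.
  assert (E : (lj - li) * dot u v =
    (mulmv (matS a b) u 0%nat - li * u 0%nat) * v 0%nat + (mulmv (matS a b) u 1%nat - li * u 1%nat) * v 1%nat
    + (mulmv (matS a b) u 2%nat - li * u 2%nat) * v 2%nat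
    - ((mulmv (matS a b) v 0%nat - lj * v 0%nat) * u 0%nat + (mulmv (matS a b) v 1%nat - lj * v 1%nat) * u 1%nat
    + (mulmv (matS a b) v 2%nat - lj * v 2%nat) * u 2%nat)).
  { unfold dot, mulmv, matS, mk3; simpl; ring. }
  rewrite !Hu, !Hv in E. assert (E' : (lj - li) * dot u v = 0) by (rewrite E; ring).
  apply Rmult_integral in E'. destruct E' as [E'|E']; [lra|]. exact E'.
Qed.

Definition sq3 (v : Vec) : R := v 0%nat ^ 2 + v 1%nat ^ 2 + v 2%nat ^ 2.

Lemma gram_norm (u v : Vec) :
  0 < sq3 u -> 0 < sq3 v ->
  normalize u 0%nat * normalize v 0%nat + normalize u 1%nat * normalize v 1%nat
  + normalize u 2%nat * normalize v 2%nat = dot u v / (vnorm u * vnorm v).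
Proof.
  intros Hu Hv. unfold normalize, dot, vnorm.
  assert (0 < sqrt (u 0%nat ^ 2 + u 1%nat ^ 2 + u 2%nat ^ 2)) by (apply sqrt_lt_R0; exact Hu).
  assert (0 < sqrt (v 0%nat ^ 2 + v 1%nat ^ 2 + v 2%nat ^ 2)) by (apply sqrt_lt_R0; exact Hv).
  field. split; lra.
Qed.

Lemma gram_self (u : Vec) : 0 < sq3 u ->
  normalize u 0%nat * normalize u 0%nat + normalize u 1%nat * normalize u 1%nat
  + normalize u 2%nat * normalize u 2%nat = 1.
Proof.
  intros Hu. rewrite gram_norm by auto. unfold dot, vnorm.
  unfold sq3 in Hu.
  rewrite sqrt_sqrt by lra. field. lra.
Qed.

Lemma calA_eq a b l1 l2 l3 :
  pc a b l1 = 0 -> pc a b l2 = 0 -> pc a b l3 = 0 -> l1 < l2 < l3 ->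
  0 < sq3 (ell1 a b l1) -> 0 < sq3 (ell2 a b l2) -> 0 < sq3 (ell3 a b l3) ->
  forall i j, (i < 3)%nat -> (j < 3)%nat ->
  calA a b l1 l2 l3 i j =
   let T := matT a b l1 l2 l3 in
   T 0%nat i * (a * T 1%nat j + b * T 2%nat j) + T 1%nat i * T 0%nat j + T 2%nat i * T 1%nat j.
Proof.
  intros p1 p2 p3 Hl q1 q2 q3 i j Hi Hj.
  assert (Hinv : forall i j, (i < 3)%nat -> (j < 3)%nat -> inv3 (matT a b l1 l2 l3) i j = matT a b l1 l2 l3 j i).
  { apply inv3_orth; unfold gram, matT.
    - apply gram_self; auto.
    - apply gram_self; auto.
    - apply gram_self; auto.
    - rewrite gram_norm by auto. rewrite (eig_orth a b _ _ l1 l2); [unfold Rdiv; ring| | |lra].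
      intro k; apply ell1_eig; auto. intro k; apply ell2_eig; auto.
    - rewrite gram_norm by auto. rewrite (eig_orth a b _ _ l1 l3); [unfold Rdiv; ring| | |lra].
      intro k; apply ell1_eig; auto. intro k; apply ell3_eig; auto.
    - rewrite gram_norm by auto. rewrite (eig_orth a b _ _ l2 l3); [unfold Rdiv; ring| | |lra].
      intro k; apply ell2_eig; auto. intro k; apply ell3_eig; auto. }
  unfold calA. cbv zeta. unfold mulmm at 1.
  rewrite !Hinv by lia.
  unfold mulmm, matA, mk3. simpl. ring.
Qed.

Lemma cubic_factor (c2 c1 c0 r1 r2 r3 : R) :
  r1 <> r2 -> r1 <> r3 -> r2 <> r3 ->
  r1^3 + c2*r1^2 + c1*r1 + c0 = 0 ->
  r2^3 + c2*r2^2 + c1*r2 + c0 = 0 ->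
  r3^3 + c2*r3^2 + c1*r3 + c0 = 0 ->
  forall l, l^3 + c2*l^2 + c1*l + c0 = (l-r1)*(l-r2)*(l-r3).
Proof.
  intros n12 n13 n23 h1 h2 h3 l.
  assert (D12 : r1^2 + r1*r2 + r2^2 + c2*(r1+r2) + c1 = 0).
  { apply (Rmult_eq_reg_l (r1 - r2)); [|lra]. rewrite Rmult_0_r.
    transitivity ((r1^3 + c2*r1^2 + c1*r1 + c0) - (r2^3 + c2*r2^2 + c1*r2 + c0)); [ring|]. rewrite h1, h2; ring. }
  assert (D13 : r1^2 + r1*r3 + r3^2 + c2*(r1+r3) + c1 = 0).
  { apply (Rmult_eq_reg_l (r1 - r3)); [|lra]. rewrite Rmult_0_r.
    transitivity ((r1^3 + c2*r1^2 + c1*r1 + c0) - (r3^3 + c2*r3^2 + c1*r3 + c0)); [ring|]. rewrite h1, h3; ring. }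
  assert (C2 : c2 = -(r1+r2+r3)).
  { apply (Rmult_eq_reg_l (r2 - r3)); [|lra].
    transitivity (-(r2 - r3)*(r1+r2+r3) + ((r1^2 + r1*r2 + r2^2 + c2*(r1+r2) + c1) - (r1^2 + r1*r3 + r3^2 + c2*(r1+r3) + c1))); [ring|].
    rewrite D12, D13. ring. }
  assert (C1 : c1 = r1*r2 + r1*r3 + r2*r3).
  { rewrite C2 in D12. lra. }
  assert (C0 : c0 = - (r1*r2*r3)).
  { rewrite C2, C1 in h1. lra. }
  rewrite C2, C1, C0. ring.
Qed.

Lemma cubic_roots (c2 c1 c0 r1 r2 r3 l : R) :
  r1 <> r2 -> r1 <> r3 -> r2 <> r3 ->
  r1^3 + c2*r1^2 + c1*r1 + c0 = 0 ->
  r2^3 + c2*r2^2 + c1*r2 + c0 = 0 ->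
  r3^3 + c2*r3^2 + c1*r3 + c0 = 0 ->
  l^3 + c2*l^2 + c1*l + c0 = 0 -> l = r1 \/ l = r2 \/ l = r3.
Proof.
  intros n12 n13 n23 h1 h2 h3 hl.
  rewrite (cubic_factor c2 c1 c0 r1 r2 r3) in hl by auto.
  apply Rmult_integral in hl. destruct hl as [hl|hl]; [apply Rmult_integral in hl; destruct hl as [hl|hl]|]; lra.
Qed.

Lemma pc_eq a b l : pc a b l = l^3 + (-(3+2*a+a^2))*l^2 + (6*a+2*a^2+2*a^3-9*b^2)*l + (-(4*a^3-27*b^2)).
Proof. unfold pc; ring. Qed.

Lemma pc_factor a b r1 r2 r3 : r1 < r2 < r3 -> pc a b r1 = 0 -> pc a b r2 = 0 -> pc a b r3 = 0 ->
  forall l, pc a b l = (l-r1)*(l-r2)*(l-r3).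
Proof.
  intros H h1 h2 h3 l. rewrite pc_eq. rewrite pc_eq in h1, h2, h3.
  apply cubic_factor; auto; lra.
Qed.

Section Signs.
Variables a b : R.
Hypothesis Ha : 0 < a <= 1/100.
Hypothesis Hd : 0 <= 4*a^3 - 27*b^2.
Lemma b2_le : 27 * b^2 <= 4 * a^3. Proof. lra. Qed.
Lemma pc_0 : pc a b 0 <= 0. Proof. unfold pc. lra. Qed.
Lemma pc_half : 0 < pc a b (a/2).
Proof. unfold pc. assert (0 <= b^2) by nra. assert (0 < a*a) by nra. nra. Qed.
Lemma pc_a : 0 < pc a b a.
Proof. unfold pc. assert (0 <= b^2) by nra. assert (0 < a*a) by nra. nra. Qed.
Lemma pc_3a : pc a b (3*a) < 0.
Proof. unfold pc. assert (0 <= b^2) by nra. assert (0 < a*a) by nra. assert (0 < a*a*a) by nra. nra. Qed.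
Lemma pc_2 : pc a b 2 < 0.
Proof. unfold pc. assert (0 <= b^2) by nra. assert (0 < a*a) by nra. assert (0 < a*a*a) by nra. nra. Qed.
Lemma pc_4 : 0 < pc a b 4.
Proof. unfold pc. assert (0 <= b^2) by nra. assert (0 < a*a) by nra. assert (0 < a*a*a) by nra. nra. Qed.
End Signs.

Lemma pc_cont a b : continuity (pc a b).
Proof. unfold pc. reg. Qed.

Lemma root_in a b u v : u < v -> pc a b u <= 0 -> 0 <= pc a b v -> exists r, u <= r <= v /\ pc a b r = 0.
Proof.
  intros Huv Hu Hv.
  destruct (IVT_gen (pc a b) u v 0 (pc_cont a b)) as [r [Hr Hr0]].
  - split; [apply Rle_trans with (pc a b u); [apply Rmin_l|lra] | apply Rle_trans with (pc a b v); [lra|apply Rmax_r]].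
  - exists r. rewrite Rmin_left, Rmax_right in Hr by lra. auto.
Qed.
Lemma root_in' a b u v : u < v -> 0 <= pc a b u -> pc a b v <= 0 -> exists r, u <= r <= v /\ pc a b r = 0.
Proof.
  intros Huv Hu Hv.
  destruct (IVT_gen (pc a b) u v 0 (pc_cont a b)) as [r [Hr Hr0]].
  - split; [apply Rle_trans with (pc a b v); [apply Rmin_r|lra] | apply Rle_trans with (pc a b u); [lra|apply Rmax_l]].
  - exists r. rewrite Rmin_left, Rmax_right in Hr by lra. auto.
Qed.

Section Loc.
Variables a b : R.
Hypothesis Ha : 0 < a <= 1/100.
Hypothesis Hd : 0 <= 4*a^3 - 27*b^2.

Lemma eig_exist : exists r1 r2 r3, (0 <= r1 < a/2) /\ (a < r2 < 3*a) /\ (2 < r3 < 4) /\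
  pc a b r1 = 0 /\ pc a b r2 = 0 /\ pc a b r3 = 0.
Proof.
  assert (pc a b 0 <= 0) by (apply pc_0; auto).
  assert (0 < pc a b (a/2)) by (apply pc_half; auto).
  assert (0 < pc a b a) by (apply pc_a; auto).
  assert (pc a b (3*a) < 0) by (apply pc_3a; auto).
  assert (pc a b 2 < 0) by (apply pc_2; auto).
  assert (0 < pc a b 4) by (apply pc_4; auto).
  destruct (root_in a b 0 (a/2)) as [r1 [G1 E1]]; try lra.
  destruct (root_in' a b a (3*a)) as [r2 [G2 E2]]; try lra.
  destruct (root_in a b 2 4) as [r3 [G3 E3]]; try lra.
  exists r1, r2, r3. repeat split; try lra.
  - destruct (Req_dec r1 (a/2)); [subst; lra| lra].
  - destruct (Req_dec r2 a); [subst; lra| lra].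
  - destruct (Req_dec r2 (3*a)); [subst; lra| lra].
  - destruct (Req_dec r3 2); [subst; lra| lra].
  - destruct (Req_dec r3 4); [subst; lra| lra].
  all: auto.
Qed.

Lemma eig_loc l1 l2 l3 : l1 < l2 < l3 -> pc a b l1 = 0 -> pc a b l2 = 0 -> pc a b l3 = 0 ->
  (0 <= l1 < a/2) /\ (a < l2 < 3*a) /\ (2 < l3 < 4).
Proof.
  intros Hl h1 h2 h3.
  destruct eig_exist as [r1 [r2 [r3 [R1 [R2 [R3 [e1 [e2 e3]]]]]]]].
  rewrite pc_eq in e1, e2, e3, h1, h2, h3.
  assert (n12 : r1 <> r2) by lra. assert (n13 : r1 <> r3) by lra. assert (n23 : r2 <> r3) by lra.
  pose proof (cubic_roots _ _ _ r1 r2 r3 l1 n12 n13 n23 e1 e2 e3 h1) as C1.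
  pose proof (cubic_roots _ _ _ r1 r2 r3 l2 n12 n13 n23 e1 e2 e3 h2) as C2.
  pose proof (cubic_roots _ _ _ r1 r2 r3 l3 n12 n13 n23 e1 e2 e3 h3) as C3.
  destruct C1 as [C1|[C1|C1]]; destruct C2 as [C2|[C2|C2]]; destruct C3 as [C3|[C3|C3]]; subst; lra.
Qed.

Lemma sq1_lb l : 0 <= l < a/2 -> 9 * a^2 <= sq3 (ell1 a b l).
Proof.
  intros Hl. unfold sq3, ell1, mkv. simpl.
  assert (h : 4 * a <= (l-3)*(l-2*a)) by nra.
  assert (0 <= (a*(2*a-l))^2) by nra. assert (0 <= (3*b*(l-3))^2) by nra. nra.
Qed.
Lemma sq2_lb l : a < l < 3*a -> a^2 <= sq3 (ell2 a b l).
Proof.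
  intros Hl. unfold sq3, ell2, mkv. simpl.
  assert (h : (l - 3) * (l - a^2) - a^2 <= - a) by nra.
  assert (0 <= (-(3*a*b))^2) by nra. assert (0 <= (3*b*(l-3))^2) by nra. nra.
Qed.
Lemma sq3_lb l : 2 < l < 4 -> 1 <= sq3 (ell3 a b l).
Proof.
  intros Hl. unfold sq3, ell3, mkv. simpl.
  assert (0 <= b^2) by nra. assert (b^2 <= 1/1000) by nra.
  assert (h : 1 <= (l - 2*a) * (l - a^2) - 9*b^2) by nra.
  assert (0 <= (-(3*a*b))^2) by nra. assert (0 <= (-(a*(l - 2*a)))^2) by nra. nra.
Qed.
End Loc.

Lemma eigv_of (a b l : R) (v : Vec) : (v 0%nat <> 0 \/ v 1%nat <> 0 \/ v 2%nat <> 0) ->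
  (forall k, mulmv (matS a b) v k = l * v k) -> is_eigenvalue (matS a b) l.
Proof. intros H1 H2. exists v. split; auto. Qed.

Lemma sq_nz (v : Vec) : 0 < sq3 v -> (v 0%nat <> 0 \/ v 1%nat <> 0 \/ v 2%nat <> 0).
Proof.
  unfold sq3. intros H.
  destruct (Req_dec (v 0%nat) 0) as [h0|h0]; [|left; auto].
  destruct (Req_dec (v 1%nat) 0) as [h1|h1]; [|right; left; auto].
  destruct (Req_dec (v 2%nat) 0) as [h2|h2]; [|right; right; auto].
  rewrite h0, h1, h2 in H. lra.
Qed.

Section PP.
Context {I : Type} (X s : I -> R).
Hypothesis Hs : forall i, 0 < s i <= 1.

Definition PP (k : nat) (F : I -> R -> R) : Prop :=
  exists K, forall i, ex_derive (F i) (X i) /\ Rabs (F i (X i)) <= K * s i ^ k /\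
     s i * Rabs (Derive (F i) (X i)) <= K * s i ^ k.

Lemma spow_pos i k : 0 < s i ^ k.
Proof. apply pow_lt. apply Hs. Qed.

Lemma PP_K_nonneg k F : PP k F -> exists K, 0 <= K /\ forall i, ex_derive (F i) (X i) /\ Rabs (F i (X i)) <= K * s i ^ k /\
     s i * Rabs (Derive (F i) (X i)) <= K * s i ^ k.
Proof.
  intros [K HK]. exists (Rmax K 0). split; [apply Rmax_r|].
  intros i. destruct (HK i) as [h1 [h2 h3]]. pose proof (spow_pos i k).
  assert (K * s i ^ k <= Rmax K 0 * s i ^ k) by (apply Rmult_le_compat_r; [lra|apply Rmax_l]).
  repeat split; auto; lra.
Qed.

Lemma PP_const c : PP 0 (fun _ _ => c).
Proof.
  exists (Rabs c). intros i. repeat split.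
  - apply ex_derive_const.
  - simpl. lra.
  - rewrite Derive_const, Rabs_R0. simpl. pose proof (Rabs_pos c). pose proof (Hs i). nra.
Qed.

Lemma PP_add k F G : PP k F -> PP k G -> PP k (fun i y => F i y + G i y).
Proof.
  intros [K1 H1] [K2 H2]. exists (K1 + K2). intros i.
  destruct (H1 i) as [d1 [v1 w1]]. destruct (H2 i) as [d2 [v2 w2]].
  repeat split.
  - apply (ex_derive_plus (F i) (G i)); auto.
  - eapply Rle_trans; [apply Rabs_triang|]. lra.
  - rewrite Derive_plus by auto. pose proof (Rabs_triang (Derive (F i) (X i)) (Derive (G i) (X i))).
    pose proof (Hs i). nra.
Qed.

Lemma PP_opp k F : PP k F -> PP k (fun i y => - F i y).
Proof.
  intros [K1 H1]. exists K1. intros i.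
  destruct (H1 i) as [d1 [v1 w1]]. repeat split.
  - apply (ex_derive_opp (F i)); auto.
  - rewrite Rabs_Ropp; auto.
  - rewrite Derive_opp, Rabs_Ropp; auto.
Qed.

Lemma PP_sub k F G : PP k F -> PP k G -> PP k (fun i y => F i y - G i y).
Proof. intros h1 h2. apply (PP_add k F (fun i y => - G i y)); auto. apply PP_opp; auto. Qed.

Lemma PP_mul k m F G : PP k F -> PP m G -> PP (k + m) (fun i y => F i y * G i y).
Proof.
  intros h1 h2. destruct (PP_K_nonneg _ _ h1) as [K1 [K1p H1]]. destruct (PP_K_nonneg _ _ h2) as [K2 [K2p H2]].
  exists (2 * K1 * K2). intros i.
  destruct (H1 i) as [d1 [v1 w1]]. destruct (H2 i) as [d2 [v2 w2]].
  pose proof (spow_pos i k). pose proof (spow_pos i m). rewrite pow_add.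
  repeat split.
  - apply ex_derive_mult; auto.
  - rewrite Rabs_mult. assert (Rabs (F i (X i)) * Rabs (G i (X i)) <= (K1 * s i ^ k) * (K2 * s i ^ m)).
    { apply Rmult_le_compat; auto using Rabs_pos. }
    assert (0 <= K1 * K2 * (s i ^ k * s i ^ m)) by (apply Rmult_le_pos; nra). nra.
  - rewrite Derive_mult by auto.
    pose proof (Rabs_triang (Derive (F i) (X i) * G i (X i)) (F i (X i) * Derive (G i) (X i))) as T.
    rewrite !Rabs_mult in T.
    assert (A1 : s i * Rabs (Derive (F i) (X i)) * Rabs (G i (X i)) <= (K1 * s i ^ k) * (K2 * s i ^ m)).
    { apply Rmult_le_compat; auto using Rabs_pos. pose proof (Hs i). pose proof (Rabs_pos (Derive (F i) (X i))). nra. }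
    assert (A2 : Rabs (F i (X i)) * (s i * Rabs (Derive (G i) (X i))) <= (K1 * s i ^ k) * (K2 * s i ^ m)).
    { apply Rmult_le_compat; auto using Rabs_pos. pose proof (Hs i). pose proof (Rabs_pos (Derive (G i) (X i))). nra. }
    pose proof (Hs i). nra.
Qed.

Lemma spow_mono i k m : (m <= k)%nat -> s i ^ k <= s i ^ m.
Proof.
  intros Hmk. replace k with (m + (k - m))%nat by lia. rewrite pow_add.
  pose proof (spow_pos i m). assert (s i ^ (k - m) <= 1).
  { rewrite <- (pow1 (k - m)). apply pow_incr. pose proof (Hs i); lra. }
  assert (0 < s i ^ (k - m)) by apply spow_pos. nra.
Qed.

Lemma PP_weak k m F : (m <= k)%nat -> PP k F -> PP m F.
Proof.
  intros Hmk h. destruct (PP_K_nonneg _ _ h) as [K [Kp H]]. exists K. intros i.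
  destruct (H i) as [d [v w]]. pose proof (spow_mono i k m Hmk).
  repeat split; auto; eapply Rle_trans; eauto; apply Rmult_le_compat_l; auto.
Qed.

Lemma PP_ext k F G : (forall i, locally (X i) (fun y => F i y = G i y)) -> PP k F -> PP k G.
Proof.
  intros Hl [K H]. exists K. intros i. destruct (H i) as [d [v w]].
  assert (e : F i (X i) = G i (X i)) by (apply (locally_singleton _ _ (Hl i))).
  repeat split.
  - apply (ex_derive_ext_loc (F i) (G i)); auto.
  - rewrite <- e; auto.
  - rewrite <- (Derive_ext_loc (F i) (G i)); auto.
Qed.

Lemma PP_div k m F G c : 0 < c -> PP (k + m) F -> PP m G ->
  (forall i, c * s i ^ m <= Rabs (G i (X i))) -> PP k (fun i y => F i y / G i y).
Proof.
  intros Hc h1 h2 Hlb. destruct (PP_K_nonneg _ _ h1) as [K1 [K1p H1]]. destruct (PP_K_nonneg _ _ h2) as [K2 [K2p H2]].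
  exists (K1 / c + 2 * K1 * K2 / (c * c)). intros i.
  destruct (H1 i) as [d1 [v1 w1]]. destruct (H2 i) as [d2 [v2 w2]].
  pose proof (spow_pos i k) as pk. pose proof (spow_pos i m) as pm. rewrite pow_add in v1, w1.
  pose proof (Hlb i) as lb.
  set (g := G i (X i)) in *. set (sk := s i ^ k) in *. set (sm := s i ^ m) in *.
  assert (gpos : 0 < Rabs g) by nra.
  assert (gnz : g <> 0) by (intro E; rewrite E, Rabs_R0 in gpos; lra).
  assert (B0 : 0 <= 2 * K1 * K2 / (c * c) * sk) by (apply Rmult_le_pos; [apply Rmult_le_pos; [nra|left; apply Rinv_0_lt_compat; nra]|lra]).
  assert (B1 : 0 <= K1 / c * sk) by (apply Rmult_le_pos; [apply Rmult_le_pos; [nra|left; apply Rinv_0_lt_compat; nra]|lra]).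
  repeat split.
  - apply ex_derive_div; auto.
  - unfold Rdiv at 1. rewrite Rabs_mult, Rabs_inv.
    assert (Rabs (F i (X i)) * / Rabs g <= K1 / c * sk).
    { apply (Rmult_le_reg_r (Rabs g)); auto. rewrite Rmult_assoc, Rinv_l by lra.
      unfold Rdiv. apply Rle_trans with (K1 * (sk * sm)); [lra|].
      apply Rle_trans with (K1 / c * sk * (c * sm)); [unfold Rdiv; right; field; lra|].
      apply Rmult_le_compat_l; auto. }
    lra.
  - rewrite Derive_div by auto. fold g.
    set (f := F i (X i)) in *. set (df := Derive (F i) (X i)) in *. set (dg := Derive (G i) (X i)) in *.
    unfold Rdiv. rewrite Rabs_mult, Rabs_inv, <- RPow_abs.
    pose proof (Rabs_triang (df * g) (- (f * dg))) as T.
    replace (df * g + - (f * dg)) with (df * g - f * dg) in T by ring.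
    rewrite Rabs_Ropp, !Rabs_mult in T.
    assert (A1 : s i * (Rabs df * Rabs g) <= K1 * (sk * sm) * Rabs g).
    { rewrite <- Rmult_assoc. apply Rmult_le_compat_r; auto using Rabs_pos. }
    assert (A2 : s i * (Rabs f * Rabs dg) <= K1 * (sk * sm) * (K2 * sm)).
    { pose proof (Hs i). pose proof (Rabs_pos f). pose proof (Rabs_pos dg). apply Rle_trans with (Rabs f * (s i * Rabs dg)); [right; ring|].
      apply Rmult_le_compat; auto using Rabs_pos. nra. }
    set (G2 := Rabs g ^ 2).
    assert (G2p : c * c * (sm * sm) <= G2) by (unfold G2; simpl; rewrite Rmult_1_r; replace (c*c*(sm*sm)) with ((c*sm)*(c*sm)) by ring; apply Rmult_le_compat; nra).
    assert (G2pos : 0 < G2) by (assert (0 < c*c*(sm*sm)) by (apply Rmult_lt_0_compat; apply Rmult_lt_0_compat; lra); lra).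
    apply Rle_trans with ((K1 * (sk * sm) * Rabs g + K1 * (sk * sm) * (K2 * sm)) * / G2).
    { pose proof (Hs i). assert (0 < / G2) by (apply Rinv_0_lt_compat; auto).
      rewrite <- Rmult_assoc. apply Rmult_le_compat_r; [lra|].
      apply Rle_trans with (s i * (Rabs df * Rabs g + Rabs f * Rabs dg)); [apply Rmult_le_compat_l; lra|]. lra. }
    apply (Rmult_le_reg_r G2); auto. rewrite Rmult_assoc, Rinv_l by lra. rewrite Rmult_1_r.
    assert (E1 : K1 * (sk * sm) * Rabs g <= K1 / c * sk * G2).
    { unfold G2. apply Rle_trans with (K1 / c * sk * (c * sm * Rabs g)).
      - right. field. lra.
      - apply Rmult_le_compat_l; [nra|]. simpl. rewrite Rmult_1_r. apply Rmult_le_compat_r; auto using Rabs_pos. }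
    assert (E2 : K1 * (sk * sm) * (K2 * sm) <= 2 * K1 * K2 / (c * c) * sk * G2).
    { apply Rle_trans with (2 * K1 * K2 / (c * c) * sk * (c * c * (sm * sm))).
      - replace (2 * K1 * K2 / (c * c) * sk * (c * c * (sm * sm))) with (2 * (K1 * (sk * sm) * (K2 * sm))) by (field; lra).
        assert (0 <= K1 * (sk * sm) * (K2 * sm)) by (apply Rmult_le_pos; apply Rmult_le_pos; nra). lra.
      - apply Rmult_le_compat_l; auto. }
    lra.
Qed.

Lemma PP_sqrt m G c : 0 < c -> PP (2 * m) G ->
  (forall i, c * s i ^ (2 * m) <= G i (X i)) -> PP m (fun i y => sqrt (G i y)).
Proof.
  intros Hc h Hlb. destruct (PP_K_nonneg _ _ h) as [K [Kp H]].
  exists (sqrt K + K / (2 * sqrt c)). intros i.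
  destruct (H i) as [d [v w]]. pose proof (Hlb i) as lb.
  pose proof (spow_pos i m) as pm.
  assert (E2 : s i ^ (2 * m) = s i ^ m * s i ^ m) by (replace (2*m)%nat with (m+m)%nat by lia; apply pow_add).
  rewrite E2 in v, w, lb.
  set (g := G i (X i)) in *. set (sm := s i ^ m) in *.
  assert (gpos : 0 < g) by (assert (0 < c*(sm*sm)) by (apply Rmult_lt_0_compat; [lra| apply Rmult_lt_0_compat; lra]); lra).
  assert (sc : 0 < sqrt c) by (apply sqrt_lt_R0; auto).
  assert (sg : sqrt c * sm <= sqrt g).
  { rewrite <- (sqrt_square sm) by lra. rewrite <- sqrt_mult by nra. apply sqrt_le_1; nra. }
  destruct d as [dg Hdg].
  pose proof (is_derive_sqrt (G i) (X i) dg Hdg gpos) as Hd.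
  assert (Dg : Derive (G i) (X i) = dg) by (apply is_derive_unique; auto).
  rewrite Dg in w.
  repeat split.
  - eexists; eauto.
  - rewrite Rabs_pos_eq by apply sqrt_pos.
    assert (sqrt g <= sqrt K * sm).
    { rewrite <- (sqrt_square sm) by lra. rewrite <- sqrt_mult by nra. pose proof (Rle_abs g).
      apply sqrt_le_1; [lra| apply Rmult_le_pos; [lra| apply Rmult_le_pos; lra] | lra]. }
    assert (0 <= K / (2 * sqrt c) * sm) by (apply Rmult_le_pos; [apply Rmult_le_pos; [lra|left; apply Rinv_0_lt_compat; lra]|lra]).
    lra.
  - replace (Derive (fun y => sqrt (G i y)) (X i)) with (dg / (2 * sqrt g)) by (symmetry; apply is_derive_unique; exact Hd).
    unfold Rdiv. rewrite Rabs_mult, Rabs_inv, Rabs_pos_eq with (x := 2 * sqrt g) by (pose proof (sqrt_pos g); lra).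
    assert (0 < sqrt g) by nra.
    apply Rle_trans with (K * sm * sm * / (2 * sqrt g)).
    { rewrite <- Rmult_assoc. apply Rmult_le_compat_r; [left; apply Rinv_0_lt_compat; lra| lra]. }
    apply (Rmult_le_reg_r (2 * sqrt g)); [lra|]. rewrite Rmult_assoc, Rinv_l, Rmult_1_r by lra.
    assert (0 <= sqrt K * sm * (2 * sqrt g)) by (pose proof (sqrt_pos K); apply Rmult_le_pos; nra).
    assert (K * sm * sm <= K / (2 * sqrt c) * sm * (2 * sqrt g)).
    { apply Rle_trans with (K / (2 * sqrt c) * sm * (2 * (sqrt c * sm))).
      - right. field. lra.
      - apply Rmult_le_compat_l; [apply Rmult_le_pos; [apply Rmult_le_pos; [lra|left; apply Rinv_0_lt_compat; lra]|lra]|lra]. }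
    lra.
Qed.

Lemma PP_ext_all k F G : (forall i y, F i y = G i y) -> PP k F -> PP k G.
Proof. intros E. apply PP_ext. intros i. apply filter_forall. intros y. apply E. Qed.

Lemma PP_add' k1 k2 F G : PP k1 F -> PP k2 G -> PP (Nat.min k1 k2) (fun i y => F i y + G i y).
Proof. intros h1 h2. apply PP_add; [apply (PP_weak k1); [lia|exact h1] | apply (PP_weak k2); [lia|exact h2]]. Qed.
Lemma PP_sub' k1 k2 F G : PP k1 F -> PP k2 G -> PP (Nat.min k1 k2) (fun i y => F i y - G i y).
Proof. intros h1 h2. apply PP_sub; [apply (PP_weak k1); [lia|exact h1] | apply (PP_weak k2); [lia|exact h2]]. Qed.
Lemma PP_sq k F : PP k F -> PP (k + k) (fun i y => F i y ^ 2).
Proof. intros h. eapply PP_ext_all; [| apply (PP_mul k k F F h h)]. intros i y. simpl. ring. Qed.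
End PP.

Ltac pp_step :=
  match goal with
  | |- PP _ _ _ (fun _ _ => ?c) => eapply PP_const
  | |- PP _ _ _ (fun i y => @?A i y + @?B i y) => eapply (@PP_add' _ _ _ _ _ _ A B)
  | |- PP _ _ _ (fun i y => @?A i y - @?B i y) => eapply (@PP_sub' _ _ _ _ _ _ A B)
  | |- PP _ _ _ (fun i y => @?A i y * @?B i y) => eapply (@PP_mul _ _ _ _ _ _ A B)
  | |- PP _ _ _ (fun i y => - @?A i y) => eapply (@PP_opp _ _ _ _ A)
  | |- PP _ _ _ (fun i y => @?A i y ^ 2) => eapply (@PP_sq _ _ _ _ _ A)
  end.


Lemma Rabs_le_inv (x y : R) : Rabs x <= y -> -y <= x <= y.
Proof. intros H. pose proof (Rle_abs x). pose proof (Rle_abs (-x)). rewrite Rabs_Ropp in H1. lra. Qed.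

Lemma der_cont (f : R -> R) (y df : R) : is_derive f y df -> continuity_pt f y.
Proof. intros H. apply continuity_pt_filterlim. exact (@ex_derive_continuous R_AbsRing R_NormedModule f y (ex_intro _ df H)). Qed.

Lemma mvt_eq (f df : R -> R) u v :
  (forall y, Rmin u v <= y <= Rmax u v -> is_derive f y (df y)) ->
  exists xi, Rmin u v <= xi <= Rmax u v /\ f v - f u = df xi * (v - u).
Proof.
  intros H. apply MVT_gen.
  - intros y Hy. apply H. lra.
  - intros y Hy. apply der_cont with (df y). apply H; auto.
Qed.

Lemma mvt_bound (f df : R -> R) u v M :
  (forall y, Rmin u v <= y <= Rmax u v -> is_derive f y (df y)) ->
  (forall y, Rmin u v <= y <= Rmax u v -> Rabs (df y) <= M) ->
  Rabs (f v - f u) <= M * Rabs (v - u).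
Proof.
  intros H HM. destruct (mvt_eq f df u v H) as [xi [Hxi E]].
  rewrite E, Rabs_mult. apply Rmult_le_compat_r; [apply Rabs_pos| apply HM; auto].
Qed.

Lemma shift_derive (f : R -> R) (df x u : R) : is_derive f (x+u) df -> is_derive (fun v => f (x+v)) u df.
Proof.
  intros H. pose proof (is_derive_comp f (fun v => x + v) u df 1 H) as K.
  assert (is_derive (fun v : R => x + v) u 1) by (auto_derive; auto; ring).
  specialize (K H0). unfold scal in K; simpl in K. unfold mult in K; simpl in K.
  replace df with (1 * df) by ring. exact K.
Qed.

Lemma refl_derive (f : R -> R) (df x u : R) : is_derive f (x-u) df -> is_derive (fun v => f (x-v)) u (-df).
Proof.
  intros H. pose proof (is_derive_comp f (fun v => x - v) u df (-1) H) as K.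
  assert (is_derive (fun v : R => x - v) u (-1)) by (auto_derive; auto; ring).
  specialize (K H0). unfold scal in K; simpl in K. unfold mult in K; simpl in K.
  replace (-df) with (-1 * df) by ring. exact K.
Qed.

Lemma taylor2 (g0 g1 g2 : R -> R) x r M h :
  (forall y, Rabs (y - x) <= r -> is_derive g0 y (g1 y) /\ is_derive g1 y (g2 y) /\ Rabs (g2 y) <= M) ->
  Rabs h <= r ->
  Rabs (g0 (x+h) - g0 x - h * g1 x) <= M * h^2.
Proof.
  intros H Hh.
  assert (Hin : forall y, Rmin x (x+h) <= y <= Rmax x (x+h) -> Rabs (y - x) <= r).
  { intros y Hy. unfold Rmin, Rmax in Hy. destruct (Rle_dec x (x+h)); apply Rabs_le; split;
    destruct (Rabs_le_inv _ _ Hh); lra. }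
  destruct (mvt_eq g0 g1 x (x+h)) as [xi [Hxi E]].
  { intros y Hy. apply H. auto. }
  assert (B : Rabs (g1 xi - g1 x) <= M * Rabs (xi - x)).
  { apply mvt_bound with g2.
    - intros y Hy. apply H. apply Hin. unfold Rmin, Rmax in *. destruct (Rle_dec x xi), (Rle_dec x (x+h)); lra.
    - intros y Hy. apply H. apply Hin. unfold Rmin, Rmax in *. destruct (Rle_dec x xi), (Rle_dec x (x+h)); lra. }
  assert (Hxr : Rabs (xi - x) <= Rabs h).
  { unfold Rmin, Rmax in Hxi. destruct (Rle_dec x (x+h)); apply Rabs_le; destruct (Rabs_le_inv h (Rabs h) (Rle_refl _)); lra. }
  replace (g0 (x+h) - g0 x - h * g1 x) with (h * (g1 xi - g1 x)) by (replace (x + h - x) with h in E by ring; lra).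
  rewrite Rabs_mult.
  assert (0 <= M).
  { destruct (H x) as [_ [_ Hm]]. rewrite Rminus_diag, Rabs_R0. pose proof (Rabs_pos h); lra. pose proof (Rabs_pos (g2 x)); lra. }
  pose proof (Rabs_pos h). pose proof (Rabs_pos (xi - x)).
  assert (Rabs h * Rabs h = h^2) by (rewrite <- Rabs_mult; simpl; rewrite Rmult_1_r; apply Rabs_pos_eq; nra).
  assert (Rabs (g1 xi - g1 x) <= M * Rabs h) by (eapply Rle_trans; [exact B| apply Rmult_le_compat_l; auto]).
  nra.
Qed.

Lemma glaeser (g0 g1 g2 : R -> R) x r M :
  0 < r ->
  (forall y, Rabs (y - x) <= r -> is_derive g0 y (g1 y) /\ is_derive g1 y (g2 y) /\ Rabs (g2 y) <= M) ->
  (forall y, Rabs (y - x) <= r -> 0 <= g0 y) ->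
  0 < g0 x <= r^2 ->
  Rabs (g1 x) <= 2 * sqrt (Rabs M + 1) * sqrt (g0 x).
Proof.
  intros Hr H Hpos Hx.
  set (K := sqrt (Rabs M + 1)). set (u := sqrt (g0 x)).
  assert (HK1 : 1 <= K). { unfold K. apply Rle_trans with (sqrt 1); [rewrite sqrt_1; lra|]. apply sqrt_le_1; pose proof (Rabs_pos M); lra. }
  assert (HK2 : K * K = Rabs M + 1) by (unfold K; apply sqrt_sqrt; pose proof (Rabs_pos M); lra).
  assert (Hu : 0 < u) by (unfold u; apply sqrt_lt_R0; lra).
  assert (Hu2 : u * u = g0 x) by (unfold u; apply sqrt_sqrt; lra).
  assert (Hur : u <= r). { unfold u. rewrite <- (sqrt_pow2 r) by lra. apply sqrt_le_1; lra. }
  set (sg := if Rle_dec 0 (g1 x) then 1 else -1).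
  set (h := - sg * u / K).
  assert (Hsg : sg * g1 x = Rabs (g1 x)).
  { unfold sg. destruct (Rle_dec 0 (g1 x)). rewrite Rabs_pos_eq; lra. rewrite Rabs_left; lra. }
  assert (Hsg2 : sg * sg = 1) by (unfold sg; destruct (Rle_dec 0 (g1 x)); lra).
  assert (Hh : Rabs h <= r).
  { unfold h. unfold Rdiv. rewrite !Rabs_mult, Rabs_Ropp, Rabs_inv, (Rabs_pos_eq u), (Rabs_pos_eq K) by lra.
    assert (Rabs sg = 1) by (unfold sg; destruct (Rle_dec 0 (g1 x)); [rewrite Rabs_pos_eq|rewrite Rabs_left]; lra).
    rewrite H0. apply Rle_trans with u; [|auto].
    apply (Rmult_le_reg_r K); [lra|]. rewrite Rmult_assoc, Rinv_l by lra. nra. }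
  pose proof (taylor2 g0 g1 g2 x r M h H Hh) as T.
  assert (P : 0 <= g0 (x + h)) by (apply Hpos; replace (x + h - x) with h by ring; auto).
  assert (hg : h * g1 x = - (u / K) * Rabs (g1 x)) by (unfold h; rewrite <- Hsg; field; lra).
  assert (h2 : h^2 = u * u / (K*K)) by (unfold h; replace ((- sg * u / K)^2) with ((sg * sg) * (u * u) / (K*K)) by (field; lra); rewrite Hsg2; field; lra).
  assert (Mh : M * h^2 <= u * u).
  { rewrite h2, HK2. apply Rle_trans with (Rabs M * (u*u/(Rabs M + 1))).
    - apply Rmult_le_compat_r; [apply Rmult_le_pos; [nra| left; apply Rinv_0_lt_compat; pose proof (Rabs_pos M); lra]|apply Rle_abs].
    - apply (Rmult_le_reg_r (Rabs M + 1)); [pose proof (Rabs_pos M); lra|].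
      field_simplify; [|pose proof (Rabs_pos M); lra]. pose proof (Rabs_pos M). nra. }
  pose proof (Rle_abs (g0 (x + h) - g0 x - h * g1 x)).
  assert (u / K * Rabs (g1 x) <= 2 * (u * u)) by lra.
  assert (Rabs (g1 x) <= 2 * K * u).
  { apply (Rmult_le_reg_l (u / K)). apply Rdiv_lt_0_compat; lra.
    replace (u / K * (2 * K * u)) with (2 * (u*u)) by (field; lra). auto. }
  lra.
Qed.

Lemma is_derive_eq (f g : R -> R) (x l l' : R) :
  is_derive f x l -> (forall y, f y = g y) -> l = l' -> is_derive g x l'.
Proof. intros H E L. subst. eapply is_derive_ext; [exact E| exact H]. Qed.

Lemma sym3 (b0 b1 b2 b3 : R -> R) x r M h :
  (forall y, Rabs (y - x) <= r -> is_derive b0 y (b1 y) /\ is_derive b1 y (b2 y) /\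
      is_derive b2 y (b3 y) /\ Rabs (b3 y) <= M) ->
  0 <= h <= r ->
  Rabs (b0 (x+h) - b0 (x-h) - 2 * h * b1 x) <= 2 * M * h^3.
Proof.
  intros H Hh.
  set (G := fun u => b0 (x+u) - b0 (x-u) - 2 * u * b1 x).
  set (dG := fun u => b1 (x+u) + b1 (x-u) - 2 * b1 x).
  assert (HG : forall u, 0 <= u <= h -> is_derive G u (dG u)).
  { intros u Hu. unfold G, dG.
    assert (d1 : is_derive (fun v => b0 (x+v)) u (b1 (x+u))).
    { apply shift_derive. apply H. replace (x + u - x) with u by ring. rewrite Rabs_pos_eq; lra. }
    assert (d2 : is_derive (fun v => b0 (x-v)) u (- b1 (x-u))).
    { apply refl_derive. apply H. replace (x - u - x) with (-u) by ring. rewrite Rabs_Ropp, Rabs_pos_eq; lra. }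
    assert (d3 : is_derive (fun v => 2 * v * b1 x) u (2 * b1 x)) by (auto_derive; auto; ring).
    pose proof (is_derive_minus _ _ _ _ _ (is_derive_minus _ _ _ _ _ d1 d2) d3) as D.
    unfold minus, plus, opp in D; simpl in D.
    eapply is_derive_eq; [exact D| intros v; simpl; ring| ring]. }
  destruct (mvt_eq G dG 0 h) as [eta [Heta E]].
  { intros u Hu. apply HG. rewrite Rmin_left, Rmax_right in Hu by lra. lra. }
  rewrite Rmin_left, Rmax_right in Heta by lra.
  assert (G0 : G 0 = 0) by (unfold G; replace (x+0) with x by ring; replace (x-0) with x by ring; ring).
  assert (Hin : forall y, x - h <= y <= x + h -> Rabs (y - x) <= r).
  { intros y Hy. apply Rabs_le. lra. }
  destruct (mvt_eq b1 b2 x (x+eta)) as [xi1 [Hx1 E1]].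
  { intros y Hy. apply H. apply Hin. unfold Rmin, Rmax in Hy. destruct (Rle_dec x (x+eta)); lra. }
  destruct (mvt_eq b1 b2 (x-eta) x) as [xi2 [Hx2 E2]].
  { intros y Hy. apply H. apply Hin. unfold Rmin, Rmax in Hy. destruct (Rle_dec (x-eta) x); lra. }
  rewrite Rmin_left, Rmax_right in Hx1 by lra. rewrite Rmin_left, Rmax_right in Hx2 by lra.
  assert (B : Rabs (b2 xi1 - b2 xi2) <= M * Rabs (xi1 - xi2)).
  { apply mvt_bound with b3.
    - intros y Hy. apply H. apply Hin. unfold Rmin, Rmax in Hy. destruct (Rle_dec xi2 xi1); lra.
    - intros y Hy. apply H. apply Hin. unfold Rmin, Rmax in Hy. destruct (Rle_dec xi2 xi1); lra. }
  assert (M0 : 0 <= M).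
  { destruct (H x) as [_ [_ [_ Hm]]]. rewrite Rminus_diag, Rabs_R0. lra. pose proof (Rabs_pos (b3 x)); lra. }
  assert (Hd12 : Rabs (xi1 - xi2) <= 2 * eta) by (apply Rabs_le; lra).
  assert (dGe : dG eta = eta * (b2 xi1 - b2 xi2)).
  { unfold dG. replace (x + eta - x) with eta in E1 by ring. replace (x - (x - eta)) with eta in E2 by ring. lra. }
  assert (BdG : Rabs (dG eta) <= 2 * M * h^2).
  { rewrite dGe, Rabs_mult, Rabs_pos_eq by lra.
    apply Rle_trans with (eta * (M * (2 * eta))).
    - apply Rmult_le_compat_l; [lra|]. eapply Rle_trans; [exact B|]. apply Rmult_le_compat_l; auto.
    - simpl. assert (eta*eta <= h*h) by (apply Rmult_le_compat; lra). nra. }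
  rewrite G0 in E.
  replace (b0 (x + h) - b0 (x - h) - 2 * h * b1 x) with (dG eta * h) by (unfold G in E; lra).
  rewrite Rabs_mult, (Rabs_pos_eq h) by lra.
  replace (2 * M * h^3) with (2 * M * h^2 * h) by ring.
  apply Rmult_le_compat_r; lra.
Qed.

Definition Kb (M2 M3 : R) : R :=
  let K4 := 1 + 2 * sqrt (Rabs M2 + 1) + Rabs M2 in K4 * sqrt K4 + Rabs M3.

Lemma bbound (a0 a1 a2 b0 b1 b2 b3 : R -> R) x r M2 M3 :
  0 < r ->
  (forall y, Rabs (y - x) <= r -> is_derive a0 y (a1 y) /\ is_derive a1 y (a2 y) /\ Rabs (a2 y) <= M2) ->
  (forall y, Rabs (y - x) <= r -> is_derive b0 y (b1 y) /\ is_derive b1 y (b2 y) /\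
      is_derive b2 y (b3 y) /\ Rabs (b3 y) <= M3) ->
  (forall y, Rabs (y - x) <= r -> 0 <= a0 y) ->
  (forall y, Rabs (y - x) <= r -> b0 y ^ 2 <= a0 y ^ 3) ->
  0 < a0 x <= r^2 ->
  Rabs (b1 x) <= Kb M2 M3 * a0 x.
Proof.
  intros Hr Ha Hb Hpos Hba Hx.
  set (A := a0 x). set (h := sqrt A). set (K := sqrt (Rabs M2 + 1)).
  set (K4 := 1 + 2 * K + Rabs M2).
  assert (HK : 0 <= K) by apply sqrt_pos.
  assert (Hh : 0 < h) by (apply sqrt_lt_R0; unfold A; lra).
  assert (Hh2 : h * h = A) by (apply sqrt_sqrt; unfold A; lra).
  assert (Hhr : h <= r). { unfold h. rewrite <- (sqrt_pow2 r) by lra. apply sqrt_le_1; unfold A; lra. }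
  pose proof (glaeser a0 a1 a2 x r M2 Hr Ha Hpos Hx) as G. fold A K h in G.
  pose proof (Rabs_pos M2) as PM2. pose proof (Rabs_pos M3) as PM3.
  assert (Hup : forall e, Rabs e <= h -> a0 (x + e) <= K4 * A).
  { intros e He. pose proof (taylor2 a0 a1 a2 x r M2 e Ha ltac:(lra)) as T.
    pose proof (Rle_abs (a0 (x + e) - a0 x - e * a1 x)).
    assert (Rabs (e * a1 x) <= h * (2 * K * h)).
    { rewrite Rabs_mult. apply Rmult_le_compat; auto using Rabs_pos. }
    pose proof (Rle_abs (e * a1 x)).
    assert (M2 * e^2 <= Rabs M2 * A).
    { apply Rle_trans with (Rabs M2 * e^2). apply Rmult_le_compat_r; [nra| apply Rle_abs].
      apply Rmult_le_compat_l; auto. rewrite <- Hh2.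
      replace (e^2) with (Rabs e * Rabs e) by (rewrite <- Rabs_mult; simpl; rewrite Rmult_1_r; apply Rabs_pos_eq; nra).
      apply Rmult_le_compat; auto using Rabs_pos. }
    assert (h*(2*K*h) = 2*K*A) by (rewrite <- Hh2; ring).
    unfold K4. unfold A in *. lra. }
  assert (HK4 : 1 <= K4) by (unfold K4; lra).
  assert (Hb0 : forall e, Rabs e <= h -> Rabs (b0 (x + e)) <= K4 * sqrt K4 * A * h).
  { intros e He. assert (Hy : Rabs (x + e - x) <= r) by (replace (x+e-x) with e by ring; lra).
    pose proof (Hba _ Hy) as B1. pose proof (Hpos _ Hy) as P1. pose proof (Hup e He) as U.
    rewrite <- sqrt_pow2 with (x := Rabs (b0 (x+e))) by apply Rabs_pos.
    assert (E : K4 * sqrt K4 * A * h = sqrt ((K4 * A)^3)).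
    { assert (0 <= A) by (unfold A; lra).
      replace ((K4*A)^3) with ((K4*A)^2 * (K4 * A)) by ring.
      rewrite sqrt_mult by nra. rewrite sqrt_pow2 by nra. rewrite sqrt_mult by nra. unfold h. ring. }
    rewrite E. apply sqrt_le_1; [apply pow2_ge_0 | apply pow_le; apply Rmult_le_pos; unfold A; lra |].
    rewrite pow2_abs.
    apply Rle_trans with (a0 (x+e) ^ 3); auto. apply pow_incr. lra. }
  pose proof (sym3 b0 b1 b2 b3 x r M3 h Hb ltac:(lra)) as S.
  pose proof (Hb0 h ltac:(rewrite Rabs_pos_eq; lra)) as P.
  pose proof (Hb0 (-h) ltac:(rewrite Rabs_Ropp, Rabs_pos_eq; lra)) as Q.
  replace (x + - h) with (x - h) in Q by ring.
  assert (T : Rabs (2 * h * b1 x) <= Rabs (b0 (x + h)) + Rabs (b0 (x - h)) + 2 * M3 * h^3).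
  { replace (2 * h * b1 x) with (b0 (x + h) - b0 (x - h) - (b0 (x + h) - b0 (x - h) - 2 * h * b1 x)) by ring.
    eapply Rle_trans; [apply Rabs_triang|]. rewrite Rabs_Ropp.
    pose proof (Rabs_triang (b0 (x + h)) (- b0 (x - h))). rewrite Rabs_Ropp in H. unfold Rminus at 1. lra. }
  rewrite Rabs_mult, Rabs_mult, (Rabs_pos_eq 2), (Rabs_pos_eq h) in T by lra.
  assert (h3 : M3 * h^3 <= Rabs M3 * (A * h)).
  { rewrite <- Hh2. replace (h^3) with (h*h*h) by ring. apply Rmult_le_compat_r. nra. apply Rle_abs. }
  unfold Kb. fold K K4. fold A.
  apply (Rmult_le_reg_l (2 * h)); [lra|].
  nra.
Qed.

Lemma cpt_eps f x : continuity_pt f x -> forall e, 0 < e -> exists d, 0 < d /\ forall y, Rabs (y - x) < d -> Rabs (f y - f x) < e.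
Proof.
  intros H e He. destruct (H e He) as [d [Hd Hy]]. exists d. split; auto.
  intros y Hyx. destruct (Req_dec y x) as [E|E].
  - subst. rewrite Rminus_diag, Rabs_R0. auto.
  - apply (Hy y). split. split; [exact I| auto]. exact Hyx.
Qed.

Lemma eps_cpt f x : (forall e, 0 < e -> exists d, 0 < d /\ forall y, Rabs (y - x) < d -> Rabs (f y - f x) < e) -> continuity_pt f x.
Proof.
  intros H e He. destruct (H e He) as [d [Hd Hy]]. exists d. split; auto.
  intros y [_ Hyx]. apply Hy. exact Hyx.
Qed.

Lemma prodcont (N E : R -> R) x n0 :
  derivable_pt_lim N x n0 -> N x = 0 -> continuity_pt E x ->
  derivable_pt_lim (fun y => N y * E y) x (n0 * E x).
Proof.
  intros HN N0 HE e He.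
  set (B := Rabs (E x) + 1).
  assert (HB : 0 < B) by (unfold B; pose proof (Rabs_pos (E x)); lra).
  set (e1 := Rmin 1 (e / (2 * B))).
  assert (He1 : 0 < e1) by (unfold e1; apply Rmin_pos; [lra| apply Rdiv_lt_0_compat; lra]).
  destruct (HN e1 He1) as [d1 Hd1].
  set (e2 := e / (2 * (Rabs n0 + 1))).
  assert (He2 : 0 < e2) by (unfold e2; apply Rdiv_lt_0_compat; [lra| pose proof (Rabs_pos n0); lra]).
  destruct (cpt_eps E x HE (Rmin 1 e2) (Rmin_pos _ _ Rlt_0_1 He2)) as [d2 [Hd2 Hy2]].
  assert (Hd : 0 < Rmin d1 d2) by (apply Rmin_pos; [apply cond_pos| auto]).
  exists (mkposreal _ Hd). intros h Hh0 Hh. simpl in Hh.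
  assert (h1 : Rabs h < d1) by (eapply Rlt_le_trans; [exact Hh| apply Rmin_l]).
  assert (h2 : Rabs h < d2) by (eapply Rlt_le_trans; [exact Hh| apply Rmin_r]).
  specialize (Hd1 h Hh0 h1). rewrite N0 in Hd1.
  specialize (Hy2 (x + h) ltac:(replace (x + h - x) with h by ring; auto)).
  rewrite N0, Rmult_0_l, Rminus_0_r.
  set (q := (N (x + h) - 0) / h) in *.
  replace (N (x + h) * E (x + h) / h) with (q * E (x + h)) by (unfold q; field; auto).
  replace (q * E (x + h) - n0 * E x) with ((q - n0) * E (x + h) + n0 * (E (x + h) - E x)) by ring.
  eapply Rle_lt_trans; [apply Rabs_triang|]. rewrite !Rabs_mult.
  assert (EB : Rabs (E (x + h)) <= B).
  { unfold B. pose proof (Rabs_triang (E (x+h) - E x) (E x)). replace (E (x + h) - E x + E x) with (E (x+h)) in H by ring.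
    pose proof (Rmin_l 1 e2). lra. }
  assert (T1 : Rabs (q - n0) * Rabs (E (x + h)) <= e / (2 * B) * B).
  { apply Rmult_le_compat; auto using Rabs_pos. left. eapply Rlt_le_trans; [exact Hd1| apply Rmin_r]. }
  assert (T2 : Rabs n0 * Rabs (E (x + h) - E x) < (Rabs n0 + 1) * e2).
  { pose proof (Rabs_pos n0). pose proof (Rmin_r 1 e2).
    apply Rle_lt_trans with (Rabs n0 * e2). apply Rmult_le_compat_l; lra. nra. }
  replace (e / (2 * B) * B) with (e / 2) in T1 by (field; lra).
  replace ((Rabs n0 + 1) * e2) with (e / 2) in T2 by (unfold e2; field; pose proof (Rabs_pos n0); lra).
  lra.
Qed.

Lemma root_deriv (c2 c1 c0 l m2 m3 : R -> R) x r g d2 d1 d0 :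
  0 < r -> 0 < g ->
  is_derive c2 x d2 -> is_derive c1 x d1 -> is_derive c0 x d0 ->
  (forall y, Rabs (y - x) < r -> forall L, L^3 + c2 y * L^2 + c1 y * L + c0 y = (L - l y) * (L - m2 y) * (L - m3 y)) ->
  (forall y, Rabs (y - x) < r -> g <= Rabs (l x - m2 y) /\ g <= Rabs (l x - m3 y)) ->
  is_derive l x (- (d2 * (l x)^2 + d1 * l x + d0) / ((l x - m2 x) * (l x - m3 x))).
Proof.
  intros Hr Hg D2 D1 D0 Hf Hgap.
  set (lx := l x) in *.
  set (N := fun y => lx^3 + c2 y * lx^2 + c1 y * lx + c0 y).
  set (n0 := d2 * lx^2 + d1 * lx + d0).
  assert (HN : is_derive N x n0).
  { unfold N, n0.
    assert (A2 : is_derive (fun y => lx^2 * c2 y) x (lx^2 * d2)) by (apply is_derive_scal; auto).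
    assert (A1 : is_derive (fun y => lx * c1 y) x (lx * d1)) by (apply is_derive_scal; auto).
    pose proof (is_derive_plus _ _ _ _ _ (is_derive_plus _ _ _ _ _ (is_derive_plus _ _ _ _ _ (is_derive_const (lx^3) x) A2) A1) D0) as A.
    eapply is_derive_eq; [exact A| intros y; simpl; unfold plus; simpl; ring| unfold plus, zero; simpl; ring]. }
  assert (Hx0 : Rabs (x - x) < r) by (rewrite Rminus_diag, Rabs_R0; auto).
  assert (Nfac : forall y, Rabs (y - x) < r -> N y = (lx - l y) * (lx - m2 y) * (lx - m3 y)).
  { intros y Hy. unfold N. apply Hf; auto. }
  assert (N0 : N x = 0) by (rewrite Nfac by auto; unfold lx; ring).
  assert (NC : continuity_pt N x) by (apply der_cont with n0; auto).
  assert (LC : continuity_pt l x).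
  { apply eps_cpt. intros e He.
    destruct (cpt_eps N x NC (e * (g * g))) as [d [Hd Hy]]. { apply Rmult_lt_0_compat; nra. }
    exists (Rmin d r). split; [apply Rmin_pos; auto|].
    intros y Hyx. assert (Hyd : Rabs (y - x) < d) by (eapply Rlt_le_trans; [exact Hyx| apply Rmin_l]).
    assert (Hyr : Rabs (y - x) < r) by (eapply Rlt_le_trans; [exact Hyx| apply Rmin_r]).
    specialize (Hy y Hyd). rewrite N0, Rminus_0_r, Nfac, !Rabs_mult in Hy by auto.
    destruct (Hgap y Hyr) as [g2 g3].
    assert (Rabs (lx - l y) * (g * g) < e * (g * g)).
    { eapply Rle_lt_trans; [|exact Hy]. rewrite Rmult_assoc. apply Rmult_le_compat_l; [apply Rabs_pos|].
      apply Rmult_le_compat; lra. }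
    rewrite <- Rabs_Ropp. replace (- (l y - l x)) with (lx - l y) by (unfold lx; ring).
    apply (Rmult_lt_reg_r (g * g)); [nra| auto]. }
  set (D := fun y => (l y)^2 + l y * lx + lx^2 + c2 y * (l y + lx) + c1 y).
  assert (DC : continuity_pt D x).
  { unfold D. 
    assert (C2 : continuity_pt c2 x) by (apply der_cont with d2; auto).
    assert (C1 : continuity_pt c1 x) by (apply der_cont with d1; auto).
    assert (Cc : forall k, continuity_pt (fun _ => k) x) by (intros k; apply continuity_pt_const; intros u v; auto).
    repeat first [ apply (continuity_pt_plus (fun y => _) (fun y => _)) | apply (continuity_pt_mult (fun y => _) (fun y => _))
             | apply (continuity_pt_plus (fun y => _) c1) | apply (continuity_pt_mult c2 (fun y => _)) ]; auto.
    all: try apply (continuity_pt_mult l (fun y => 1)); auto.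
    all: try apply (continuity_pt_mult l l); auto.
    all: try apply (continuity_pt_plus l (fun y => lx)); auto.
    all: try apply (continuity_pt_mult l (fun y => lx)); auto. }
  assert (DX : D x = (lx - m2 x) * (lx - m3 x)).
  { pose proof (Hf x Hx0 0) as E0. pose proof (Hf x Hx0 1) as E1. pose proof (Hf x Hx0 (-1)) as Em.
    fold lx in E0, E1, Em. unfold D. fold lx.
    assert (c0 x = - (lx * m2 x * m3 x)) by (ring_simplify in E0; lra).
    assert (c2 x = - (lx + m2 x + m3 x)) by (ring_simplify in E1; ring_simplify in Em; lra).
    assert (c1 x = lx * m2 x + lx * m3 x + m2 x * m3 x) by (ring_simplify in E1; ring_simplify in Em; lra).
    rewrite H0, H1. ring. }
  destruct (Hgap x Hx0) as [gx2 gx3]. fold lx in gx2, gx3.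
  assert (DXnz : D x <> 0).
  { rewrite DX. intro Z. apply Rmult_integral in Z. destruct Z as [Z|Z]; rewrite Z, Rabs_R0 in *; lra. }
  assert (Hid : forall y, Rabs (y - x) < r -> (l y - lx) * D y = - N y).
  { intros y Hy. pose proof (Hf y Hy (l y)) as P. replace (l y - l y) with 0 in P by ring.
    rewrite Rmult_0_l, Rmult_0_l in P. unfold N, D. 
    transitivity (-(lx ^ 3 + c2 y * lx ^ 2 + c1 y * lx + c0 y) + (l y ^ 3 + c2 y * l y ^ 2 + c1 y * l y + c0 y)); [ring|].
    rewrite P. ring. }
  destruct (cpt_eps D x DC (Rabs (D x) / 2)) as [d3 [Hd3 Hy3]].
  { apply Rdiv_lt_0_compat; [apply Rabs_pos_lt; auto| lra]. }
  set (E := fun y => - / D y).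
  assert (EC : continuity_pt E x).
  { unfold E. apply (continuity_pt_opp (fun y => / D y)). apply (continuity_pt_inv D); auto. }
  pose proof (prodcont N E x n0 (proj1 (is_derive_Reals _ _ _) HN) N0 EC) as PD.
  apply is_derive_Reals in PD.
  assert (PD2 : is_derive (fun y => lx + N y * E y) x (n0 * E x)).
  { eapply is_derive_eq; [exact (is_derive_plus _ _ _ _ _ (is_derive_const lx x) PD)| intros y; unfold plus; simpl; ring| unfold plus, zero; simpl; ring]. }
  assert (Hloc : locally x (fun y => lx + N y * E y = l y)).
  { assert (Hm : 0 < Rmin r d3) by (apply Rmin_pos; auto).
    exists (mkposreal _ Hm). intros y Hy. change (Rabs (y - x) < Rmin r d3) in Hy.
    assert (Hyr : Rabs (y - x) < r) by (eapply Rlt_le_trans; [exact Hy| apply Rmin_l]).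
    assert (Hyd : Rabs (y - x) < d3) by (eapply Rlt_le_trans; [exact Hy| apply Rmin_r]).
    specialize (Hy3 y Hyd).
    assert (Dnz : D y <> 0).
    { intro Z. rewrite Z, Rminus_0_l, Rabs_Ropp in Hy3. pose proof (Rabs_pos_lt _ DXnz). lra. }
    pose proof (Hid y Hyr). unfold E. replace (N y) with (-((l y - lx)*D y)) by lra. field; auto. }
  eapply is_derive_ext_loc in PD2; [|exact Hloc].
  eapply is_derive_eq; [exact PD2| intros; reflexivity|].
  unfold E, n0. rewrite DX. field. split; intro Z; rewrite Z, Rabs_R0 in *; lra.
Qed.

Lemma rbar_rad (w1 w2 : Rbar) : Rbar_lt w1 0 -> Rbar_lt 0 w2 ->
  exists r, 0 < r /\ forall y, Rabs y < 3 * r -> Rbar_lt w1 y /\ Rbar_lt y w2.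
Proof.
  intros H1 H2.
  assert (E1 : exists r1, 0 < r1 /\ forall y, Rabs y < r1 -> Rbar_lt w1 y).
  { destruct w1 as [v| |]; simpl in H1.
    - exists (-v). split; [lra|]. intros y Hy. simpl. pose proof (Rle_abs (-y)). rewrite Rabs_Ropp in H. lra.
    - contradiction.
    - exists 1. split; [lra|]. intros; simpl; auto. }
  assert (E2 : exists r2, 0 < r2 /\ forall y, Rabs y < r2 -> Rbar_lt y w2).
  { destruct w2 as [v| |]; simpl in H2.
    - exists v. split; [lra|]. intros y Hy. simpl. pose proof (Rle_abs y). lra.
    - exists 1. split; [lra|]. intros; simpl; auto.
    - contradiction. }
  destruct E1 as [r1 [p1 h1]]. destruct E2 as [r2 [p2 h2]].
  exists (Rmin r1 r2 / 3). split. apply Rdiv_lt_0_compat; [apply Rmin_pos; auto| lra].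
  intros y Hy. replace (3 * (Rmin r1 r2 / 3)) with (Rmin r1 r2) in Hy by field.
  split; [apply h1| apply h2]; eapply Rlt_le_trans; eauto; [apply Rmin_l| apply Rmin_r].
Qed.

Lemma loc_abs x R0 : Rabs x < R0 -> locally x (fun y => Rabs y < R0).
Proof.
  intros H. assert (He : 0 < R0 - Rabs x) by lra.
  exists (mkposreal _ He). intros y Hy. change (Rabs (y - x) < R0 - Rabs x) in Hy. simpl in y.
  pose proof (Rabs_triang (y - x) x) as T. replace (y - x + x) with (y:R) in T by (simpl; ring). lra.
Qed.

Lemma loc_impl x (P Q : R -> Prop) : locally x P -> (forall y, P y -> Q y) -> locally x Q.
Proof. intros [e He] H. exists e. intros y Hy. apply H, He, Hy. Qed.

Lemma abs_mul_le x y X Y : Rabs x <= X -> Rabs y <= Y -> Rabs (x * y) <= X * Y.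
Proof. intros. rewrite Rabs_mult. apply Rmult_le_compat; auto using Rabs_pos. Qed.

Lemma abs3 x y z : Rabs (x + y + z) <= Rabs x + Rabs y + Rabs z.
Proof. eapply Rle_trans; [apply Rabs_triang|]. pose proof (Rabs_triang x y). lra. Qed.

Definition numl (A ap b bp l : R) : R :=
  (-(2+2*A)*ap) * l^2 + ((6+4*A+6*A^2)*ap - 18*b*bp) * l + (-(12*A^2*ap - 54*b*bp)).

Lemma numl_bound s A ap b bp l Ka KB L :
  0 < s <= 1/10 -> A = s^2 -> Rabs ap <= Ka * s -> Rabs bp <= KB * s^2 -> Rabs b <= s^3 ->
  Rabs l <= L -> 0 <= L -> 0 <= Ka -> 0 <= KB ->
  Rabs (numl A ap b bp l) <= (3 * Ka * s) * L^2 + (7 * Ka * s + 18 * KB * s^5) * L + (12 * Ka * s^5 + 54 * KB * s^5).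
Proof.
  intros Hs HA Hap Hbp Hb Hl HL HKa HKB. unfold numl.
  assert (hA : 0 < A <= 1/100) by (subst; nra).
  assert (e1 : Rabs (-(2+2*A)*ap) <= 3 * Ka * s).
  { rewrite Rabs_mult, Rabs_Ropp, Rabs_pos_eq by lra. replace (3 * Ka * s) with (3 * (Ka * s)) by ring.
    apply Rmult_le_compat; try lra; apply Rabs_pos. }
  assert (e2 : Rabs (l^2) <= L^2).
  { rewrite <- RPow_abs. apply pow_incr. split; auto using Rabs_pos. }
  assert (ebb : Rabs (b * bp) <= KB * s^5).
  { replace (KB * s^5) with (s^3 * (KB * s^2)) by ring. apply abs_mul_le; auto. }
  assert (e3 : Rabs ((6+4*A+6*A^2)*ap - 18*b*bp) <= 7 * Ka * s + 18 * KB * s^5).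
  { unfold Rminus. eapply Rle_trans; [apply Rabs_triang|]. rewrite Rabs_Ropp.
    assert (Rabs ((6+4*A+6*A^2)*ap) <= 7 * Ka * s).
    { rewrite Rabs_mult, Rabs_pos_eq by nra. replace (7 * Ka * s) with (7 * (Ka * s)) by ring.
      apply Rmult_le_compat; try nra; apply Rabs_pos. }
    replace (18*b*bp) with (18*(b*bp)) by ring. rewrite (Rabs_mult 18), (Rabs_pos_eq 18) by lra. lra. }
  assert (e4 : Rabs (-(12*A^2*ap - 54*b*bp)) <= 12 * Ka * s^5 + 54 * KB * s^5).
  { rewrite Rabs_Ropp. unfold Rminus. eapply Rle_trans; [apply Rabs_triang|]. rewrite Rabs_Ropp.
    assert (Rabs (12*A^2*ap) <= 12 * Ka * s^5).
    { rewrite Rabs_mult, Rabs_pos_eq by nra. replace (12 * Ka * s^5) with (12 * A^2 * (Ka * s)) by (subst; ring).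
      apply Rmult_le_compat_l; [nra| auto]. }
    replace (54*b*bp) with (54*(b*bp)) by ring. rewrite (Rabs_mult 54), (Rabs_pos_eq 54) by lra. lra. }
  eapply Rle_trans; [apply abs3|].
  pose proof (abs_mul_le _ _ _ _ e1 e2). pose proof (abs_mul_le _ _ _ _ e3 Hl). lra.
Qed.

Lemma lder_small s A ap b bp l m2 m3 Ka KB :
  0 < s <= 1/10 -> A = s^2 -> Rabs ap <= Ka * s -> Rabs bp <= KB * s^2 -> Rabs b <= s^3 ->
  Rabs l <= 3 * A -> A / 2 <= Rabs (l - m2) -> 1 <= Rabs (l - m3) -> 0 <= Ka -> 0 <= KB ->
  Rabs (- numl A ap b bp l / ((l - m2) * (l - m3))) <= (200 * Ka + 300 * KB) * s.
Proof.
  intros Hs HA Hap Hbp Hb Hl g2 g3 HKa HKB.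
  assert (hA : 0 < A) by (subst; nra).
  pose proof (numl_bound s A ap b bp l Ka KB (3 * A) Hs HA Hap Hbp Hb Hl ltac:(lra) HKa HKB) as N.
  assert (Hden : A / 2 <= Rabs ((l - m2) * (l - m3))) by (rewrite Rabs_mult; nra).
  unfold Rdiv. rewrite Rabs_mult, Rabs_Ropp, Rabs_inv.
  apply (Rmult_le_reg_r (Rabs ((l - m2) * (l - m3)))); [lra|].
  rewrite Rmult_assoc, Rinv_l, Rmult_1_r by lra.
  eapply Rle_trans; [exact N|].
  assert (s3 : 0 < s^3) by (apply pow_lt; lra).
  assert (s5 : s^5 <= s^3) by (replace (s^5) with (s^3 * s^2) by ring; assert (s^2 <= 1) by nra; apply Rle_trans with (s^3*1); [apply Rmult_le_compat_l; lra| lra]).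
  apply Rle_trans with ((200 * Ka + 300 * KB) * s * (A / 2)); [|apply Rmult_le_compat_l; [nra| auto]].
  subst A. replace ((3 * (s^2))^2) with (9 * s^4) by ring.
  assert (0 <= Ka * s^5) by (apply Rmult_le_pos; [lra| left; apply pow_lt; lra]).
  assert (0 <= KB * s^5) by (apply Rmult_le_pos; [lra| left; apply pow_lt; lra]).
  assert (Ka * s^5 <= Ka * s^3) by (apply Rmult_le_compat_l; lra).
  assert (KB * s^5 <= KB * s^3) by (apply Rmult_le_compat_l; lra).
  assert (KB * s^7 <= KB * s^3) by (apply Rmult_le_compat_l; [lra| replace (s^7) with (s^3 * s^4) by ring; assert (s^4 <= 1) by (rewrite <- (pow1 4); apply pow_incr; lra); nra]).
  replace (3 * Ka * s * (9 * s ^ 4) + (7 * Ka * s + 18 * KB * s ^ 5) * (3 * s ^ 2) + (12 * Ka * s ^ 5 + 54 * KB * s ^ 5))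
    with (27 * (Ka * s^5) + 21 * (Ka * s^3) + 54 * (KB * s^7) + 12 * (Ka * s^5) + 54 * (KB * s^5)) by ring.
  replace ((200 * Ka + 300 * KB) * s * (s ^ 2 / 2)) with (100 * (Ka * s^3) + 150 * (KB * s^3)) by field.
  lra.
Qed.

Lemma lder_big s A ap b bp l m2 m3 Ka KB :
  0 < s <= 1/10 -> A = s^2 -> Rabs ap <= Ka * s -> Rabs bp <= KB * s^2 -> Rabs b <= s^3 ->
  Rabs l <= 4 -> 1 <= Rabs (l - m2) -> 1 <= Rabs (l - m3) -> 0 <= Ka -> 0 <= KB ->
  Rabs (- numl A ap b bp l / ((l - m2) * (l - m3))) <= (200 * Ka + 300 * KB) * s.
Proof.
  intros Hs HA Hap Hbp Hb Hl g2 g3 HKa HKB.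
  pose proof (numl_bound s A ap b bp l Ka KB 4 Hs HA Hap Hbp Hb Hl ltac:(lra) HKa HKB) as N.
  assert (Hden : 1 <= Rabs ((l - m2) * (l - m3))) by (rewrite Rabs_mult; nra).
  unfold Rdiv. rewrite Rabs_mult, Rabs_Ropp, Rabs_inv.
  apply (Rmult_le_reg_r (Rabs ((l - m2) * (l - m3)))); [lra|].
  rewrite Rmult_assoc, Rinv_l, Rmult_1_r by lra.
  eapply Rle_trans; [exact N|].
  assert (s5 : s^5 <= s) by (replace (s^5) with (s * s^4) by ring; assert (s^4 <= 1) by (rewrite <- (pow1 4); apply pow_incr; lra); apply Rle_trans with (s*1); [apply Rmult_le_compat_l; lra| lra]).
  assert (Ka * s^5 <= Ka * s) by (apply Rmult_le_compat_l; lra).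
  assert (KB * s^5 <= KB * s) by (apply Rmult_le_compat_l; lra).
  apply Rle_trans with ((200 * Ka + 300 * KB) * s * 1); [|apply Rmult_le_compat_l; [nra| auto]].
  replace (3 * Ka * s * 4 ^ 2 + (7 * Ka * s + 18 * KB * s ^ 5) * 4 + (12 * Ka * s ^ 5 + 54 * KB * s ^ 5))
    with (48 * (Ka * s) + 28 * (Ka * s) + 72 * (KB * s^5) + 12 * (Ka * s^5) + 54 * (KB * s^5)) by ring.
  assert (0 <= Ka * s) by nra. assert (0 <= KB * s) by nra.
  lra.
Qed.

Lemma Derive_of (f : R -> R) x l : is_derive f x l -> Derive f x = l.
Proof. apply is_derive_unique. Qed.

Record Idx := mkIdx { il1 : R -> R -> R; il2 : R -> R -> R; il3 : R -> R -> R; it : R; ix : R }.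

Section Main1.
Variables (a b : R -> R -> R) (c Tt : R) (w1 w2 : Rbar) (Fa Fb : nat -> nat -> R -> R -> R) (r M01 M02 M10 N03 : R).
Definition Dom (t x : R) := -c < t < Tt /\ Rbar_lt w1 x /\ Rbar_lt x w2.
Hypothesis Hc : 0 < c.
Hypothesis HT : 0 < Tt.
Hypothesis Fa0 : forall t x, Dom t x -> Fa 0%nat 0%nat t x = a t x.
Hypothesis Fad : forall i j t x, Dom t x -> is_derive (fun s => Fa i j s x) t (Fa (S i) j t x) /\ is_derive (fun y => Fa i j t y) x (Fa i (S j) t x).
Hypothesis Fb0 : forall t x, Dom t x -> Fb 0%nat 0%nat t x = b t x.
Hypothesis Fbd : forall i j t x, Dom t x -> is_derive (fun s => Fb i j s x) t (Fb (S i) j t x) /\ is_derive (fun y => Fb i j t y) x (Fb i (S j) t x).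
Hypothesis Hr : 0 < r.
Hypothesis Hrw : forall y, Rabs y < 3 * r -> Rbar_lt w1 y /\ Rbar_lt y w2.
Hypothesis HM01 : forall t x, Dom t x -> Rabs (Fa 0%nat 1%nat t x) <= M01.
Hypothesis HM02 : forall t x, Dom t x -> Rabs (Fa 0%nat 2%nat t x) <= M02.
Hypothesis HM10 : forall t x, Dom t x -> Rabs (Fa 1%nat 0%nat t x) <= M10.
Hypothesis HN03 : forall t x, Dom t x -> Rabs (Fb 0%nat 3%nat t x) <= N03.
Hypothesis HD : forall t x : R, 0 <= t < Tt -> Rbar_lt w1 x -> Rbar_lt x w2 -> 0 <= 4 * a t x ^ 3 - 27 * b t x ^ 2.
Hypothesis Ha00 : a 0 0 = 0.
Hypothesis Hpos : forall t x : R, 0 < t < Tt -> Rbar_lt w1 x -> Rbar_lt x w2 -> 0 < a t x.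

Lemma L_dom t y : 0 <= t < Tt -> Rabs y < 3 * r -> Dom t y.
Proof. intros Ht Hy. destruct (Hrw y Hy). repeat split; auto; lra. Qed.

Lemma L_loc t y : 0 <= t < Tt -> Rabs y < 3 * r -> locally y (fun z => Dom t z).
Proof. intros Ht Hy. eapply loc_impl; [apply (loc_abs y (3*r) Hy)|]. intros z Hz. apply L_dom; auto. Qed.

Lemma L_ader t y : 0 <= t < Tt -> Rabs y < 3 * r -> is_derive (fun z => a t z) y (Fa 0%nat 1%nat t y).
Proof.
  intros Ht Hy. apply (is_derive_ext_loc (fun z => Fa 0%nat 0%nat t z)).
  - eapply loc_impl; [apply (L_loc t y Ht Hy)|]. intros z Hz. apply Fa0; auto.
  - apply Fad. apply L_dom; auto.
Qed.

Lemma L_bder t y : 0 <= t < Tt -> Rabs y < 3 * r -> is_derive (fun z => b t z) y (Fb 0%nat 1%nat t y).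
Proof.
  intros Ht Hy. apply (is_derive_ext_loc (fun z => Fb 0%nat 0%nat t z)).
  - eapply loc_impl; [apply (L_loc t y Ht Hy)|]. intros z Hz. apply Fb0; auto.
  - apply Fbd. apply L_dom; auto.
Qed.

Lemma near_r x y : Rabs x < r -> Rabs (y - x) <= r -> Rabs y < 3 * r.
Proof. intros H1 H2. pose proof (Rabs_triang (y - x) x). replace (y - x + x) with y in H by ring. lra. Qed.

Lemma L_glaeser t x : 0 < t < Tt -> Rabs x < r -> a t x <= r^2 ->
  Rabs (Fa 0%nat 1%nat t x) <= 2 * sqrt (Rabs M02 + 1) * sqrt (a t x).
Proof.
  intros Ht Hx Hax.
  assert (Dx : Dom t x) by (apply L_dom; [lra| lra]).
  rewrite <- (Fa0 t x Dx).
  apply (glaeser (fun y => Fa 0%nat 0%nat t y) (fun y => Fa 0%nat 1%nat t y) (fun y => Fa 0%nat 2%nat t y) x r M02 Hr).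
  - intros y Hy. assert (Dy : Dom t y) by (apply L_dom; [lra| eapply near_r; eauto]).
    split; [|split]; [apply (proj2 (Fad 0 0 t y Dy)) | apply (proj2 (Fad 0 1 t y Dy)) | apply HM02; auto].
  - intros y Hy. assert (Dy : Dom t y) by (apply L_dom; [lra| eapply near_r; eauto]).
    rewrite Fa0 by auto. left. apply Hpos; try apply Dy. lra.
  - rewrite Fa0 by auto. split; auto. apply Hpos; try apply Dx. lra.
Qed.

Lemma L_bb t x : 0 < t < Tt -> Rabs x < r -> a t x <= r^2 ->
  Rabs (Fb 0%nat 1%nat t x) <= Kb M02 N03 * a t x.
Proof.
  intros Ht Hx Hax.
  assert (Dx : Dom t x) by (apply L_dom; [lra| lra]).
  rewrite <- (Fa0 t x Dx).
  apply (bbound (fun y => Fa 0%nat 0%nat t y) (fun y => Fa 0%nat 1%nat t y) (fun y => Fa 0%nat 2%nat t y)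
           (fun y => Fb 0%nat 0%nat t y) (fun y => Fb 0%nat 1%nat t y) (fun y => Fb 0%nat 2%nat t y) (fun y => Fb 0%nat 3%nat t y) x r M02 N03 Hr).
  - intros y Hy. assert (Dy : Dom t y) by (apply L_dom; [lra| eapply near_r; eauto]).
    split; [|split]; [apply (proj2 (Fad 0 0 t y Dy)) | apply (proj2 (Fad 0 1 t y Dy)) | apply HM02; auto].
  - intros y Hy. assert (Dy : Dom t y) by (apply L_dom; [lra| eapply near_r; eauto]).
    split; [|split; [|split]]; [apply (proj2 (Fbd 0 0 t y Dy)) | apply (proj2 (Fbd 0 1 t y Dy)) | apply (proj2 (Fbd 0 2 t y Dy)) | apply HN03; auto].
  - intros y Hy. assert (Dy : Dom t y) by (apply L_dom; [lra| eapply near_r; eauto]).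
    rewrite Fa0 by auto. left. apply Hpos; try apply Dy. lra.
  - intros y Hy. assert (Dy : Dom t y) by (apply L_dom; [lra| eapply near_r; eauto]).
    rewrite Fa0, Fb0 by auto. destruct Dy as [_ [D1 D2]].
    pose proof (HD t y ltac:(lra) D1 D2). pose proof (Hpos t y ltac:(lra) D1 D2).
    assert (0 < a t y ^ 3) by (apply pow_lt; lra). lra.
  - rewrite Fa0 by auto. split; auto. apply Hpos; try apply Dx. lra.
Qed.

Lemma L_small t x : 0 <= t < Tt -> Rabs x < 3 * r -> Rabs (a t x) <= Rabs M10 * t + Rabs M01 * Rabs x.
Proof.
  intros Ht Hx.
  assert (D0 : Dom 0 0) by (apply L_dom; [lra| rewrite Rabs_R0; lra]).
  assert (Dt0 : Dom t 0) by (apply L_dom; [lra| rewrite Rabs_R0; lra]).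
  assert (Dtx : Dom t x) by (apply L_dom; auto).
  assert (A1 : Rabs (Fa 0%nat 0%nat t 0 - Fa 0%nat 0%nat 0 0) <= Rabs M10 * Rabs (t - 0)).
  { apply (mvt_bound (fun s => Fa 0%nat 0%nat s 0) (fun s => Fa 1%nat 0%nat s 0)).
    - intros y Hy. rewrite Rmin_left, Rmax_right in Hy by lra. apply Fad. apply L_dom; [lra| rewrite Rabs_R0; lra].
    - intros y Hy. rewrite Rmin_left, Rmax_right in Hy by lra. eapply Rle_trans; [apply HM10|apply Rle_abs].
      apply L_dom; [lra| rewrite Rabs_R0; lra]. }
  assert (A2 : Rabs (Fa 0%nat 0%nat t x - Fa 0%nat 0%nat t 0) <= Rabs M01 * Rabs (x - 0)).
  { apply (mvt_bound (fun y => Fa 0%nat 0%nat t y) (fun y => Fa 0%nat 1%nat t y)).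
    - intros y Hy. apply Fad. apply L_dom; [lra|].
      unfold Rmin, Rmax in Hy. destruct (Rle_dec 0 x); destruct (Rabs_le_inv x (Rabs x) (Rle_refl _)); apply Rabs_def1; lra.
    - intros y Hy. eapply Rle_trans; [apply HM01|apply Rle_abs]. apply L_dom; [lra|].
      unfold Rmin, Rmax in Hy. destruct (Rle_dec 0 x); destruct (Rabs_le_inv x (Rabs x) (Rle_refl _)); apply Rabs_def1; lra. }
  rewrite Fa0 in A1, A2 by auto. rewrite Fa0 in A1 by auto. rewrite Ha00 in A1.
  rewrite !Rminus_0_r in A1, A2. rewrite (Rabs_pos_eq (t - 0)) in A1 by lra. replace (t - 0) with t in A1 by ring.
  pose proof (Rabs_triang (a t x - a t 0) (a t 0)). replace (a t x - a t 0 + a t 0) with (a t x) in H by ring.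
  rewrite (Fa0 t 0 Dt0) in A2. lra.
Qed.

Definition Ka := 2 * sqrt (Rabs M02 + 1).
Definition KB := Kb M02 N03.
Definition KL := 200 * Ka + 300 * KB.
Definition eps0 := Rmin (1/100) (r^2).
Definition delta := Rmin Tt (Rmin r (eps0 / (Rabs M10 + Rabs M01 + 1))).

Lemma Ka_pos : 0 <= Ka. Proof. unfold Ka. pose proof (sqrt_pos (Rabs M02 + 1)). lra. Qed.
Lemma KB_pos : 0 <= KB.
Proof.
  unfold KB, Kb. pose proof (sqrt_pos (Rabs M02 + 1)). pose proof (Rabs_pos M02). pose proof (Rabs_pos N03).
  set (K4 := 1 + 2 * sqrt (Rabs M02 + 1) + Rabs M02). pose proof (sqrt_pos K4).
  assert (0 <= K4) by (unfold K4; lra). assert (0 <= K4 * sqrt K4) by (apply Rmult_le_pos; lra). simpl. lra.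
Qed.
Lemma KL_pos : 0 <= KL. Proof. unfold KL. pose proof Ka_pos. pose proof KB_pos. lra. Qed.

Lemma delta_pos : 0 < delta.
Proof.
  unfold delta, eps0. apply Rmin_pos; auto. apply Rmin_pos; auto. apply Rdiv_lt_0_compat.
  apply Rmin_pos; [lra| apply pow_lt; auto]. pose proof (Rabs_pos M10). pose proof (Rabs_pos M01). lra.
Qed.

Lemma L_reg t x : 0 < t < delta -> Rabs x < delta ->
  0 < t < Tt /\ Rabs x < r /\ Dom t x /\ 0 < a t x /\ a t x <= 1/100 /\ a t x <= r^2 /\ 0 <= 4 * a t x ^ 3 - 27 * b t x ^ 2.
Proof.
  intros Ht Hx.
  assert (d1 : delta <= Tt) by apply Rmin_l.
  assert (d2 : delta <= r) by (eapply Rle_trans; [apply Rmin_r| apply Rmin_l]).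
  assert (d3 : delta <= eps0 / (Rabs M10 + Rabs M01 + 1)) by (eapply Rle_trans; [apply Rmin_r| apply Rmin_r]).
  assert (Dx : Dom t x) by (apply L_dom; lra).
  destruct Dx as [Dt [Dw1 Dw2]].
  pose proof (Hpos t x ltac:(lra) Dw1 Dw2) as P.
  pose proof (L_small t x ltac:(lra) ltac:(lra)) as S.
  pose proof (Rabs_pos M10). pose proof (Rabs_pos M01).
  assert (Ssm : a t x <= eps0).
  { rewrite Rabs_pos_eq in S by lra.
    assert (Rabs M10 * t + Rabs M01 * Rabs x <= (Rabs M10 + Rabs M01) * delta).
    { pose proof (Rabs_pos x). nra. }
    assert ((Rabs M10 + Rabs M01) * delta <= eps0).
    { apply Rle_trans with ((Rabs M10 + Rabs M01 + 1) * (eps0 / (Rabs M10 + Rabs M01 + 1))).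
      - pose proof delta_pos. nra.
      - right. field. lra. }
    lra. }
  assert (e1 : eps0 <= 1/100) by apply Rmin_l. assert (e2 : eps0 <= r^2) by apply Rmin_r.
  refine (conj _ (conj _ (conj _ (conj P (conj _ (conj _ _)))))); try lra.
  apply L_dom; lra. apply HD; auto; lra.
Qed.

Definition EH (l1 l2 l3 : R -> R -> R) := forall t x, 0 < t < delta -> Rabs x < delta ->
  l1 t x < l2 t x < l3 t x /\ is_eigenvalue (matS (a t x) (b t x)) (l1 t x) /\
  is_eigenvalue (matS (a t x) (b t x)) (l2 t x) /\ is_eigenvalue (matS (a t x) (b t x)) (l3 t x).

Lemma L_eig l1 l2 l3 t x : EH l1 l2 l3 -> 0 < t < delta -> Rabs x < delta ->
  pc (a t x) (b t x) (l1 t x) = 0 /\ pc (a t x) (b t x) (l2 t x) = 0 /\ pc (a t x) (b t x) (l3 t x) = 0 /\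
  l1 t x < l2 t x < l3 t x /\
  (0 <= l1 t x < a t x / 2) /\ (a t x < l2 t x < 3 * a t x) /\ (2 < l3 t x < 4).
Proof.
  intros H Ht Hx. destruct (H t x Ht Hx) as [Hl [E1 [E2 E3]]].
  apply eig_root in E1. apply eig_root in E2. apply eig_root in E3.
  destruct (L_reg t x Ht Hx) as [_ [_ [_ [P1 [P2 [_ P3]]]]]].
  destruct (eig_loc (a t x) (b t x) ltac:(lra) P3 (l1 t x) (l2 t x) (l3 t x) Hl E1 E2 E3) as [B1 [B2 B3]].
  repeat split; auto; lra.
Qed.

Lemma L_bsmall t x : 0 < t < delta -> Rabs x < delta -> Rabs (b t x) <= sqrt (a t x) ^ 3.
Proof.
  intros Ht Hx. destruct (L_reg t x Ht Hx) as [_ [_ [_ [P1 [P2 [_ P3]]]]]].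
  set (A := a t x) in *. set (B := b t x) in *.
  assert (B^2 <= A^3) by (assert (0 < A^3) by (apply pow_lt; lra); lra).
  rewrite <- (sqrt_pow2 (Rabs B)) by apply Rabs_pos. rewrite pow2_abs.
  replace (sqrt A ^ 3) with (sqrt (A^3)).
  - apply sqrt_le_1; [nra| left; apply pow_lt; lra| auto].
  - replace (A^3) with (A^2 * A) by ring. rewrite sqrt_mult by nra. rewrite sqrt_pow2 by lra.
    pose proof (sqrt_sqrt A ltac:(lra)). replace (sqrt A ^ 3) with (sqrt A * sqrt A * sqrt A) by ring. rewrite H0. reflexivity.
Qed.

Lemma L_coef t x : 0 < t < delta -> Rabs x < delta ->
  let A := a t x in let B := b t x in let ap := Fa 0%nat 1%nat t x in let bp := Fb 0%nat 1%nat t x in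
  is_derive (fun y => -(3 + 2 * a t y + a t y ^ 2)) x (-(2+2*A)*ap) /\
  is_derive (fun y => 6*a t y + 2*a t y^2 + 2*a t y^3 - 9*b t y^2) x ((6+4*A+6*A^2)*ap - 18*B*bp) /\
  is_derive (fun y => -(4*a t y^3 - 27*b t y^2)) x (-(12*A^2*ap - 54*B*bp)).
Proof.
  intros Ht Hx A B ap bp.
  destruct (L_reg t x Ht Hx) as [T1 [X1 _]].
  assert (HA : is_derive (fun y => a t y) x ap) by (apply L_ader; lra).
  assert (HB : is_derive (fun y => b t y) x bp) by (apply L_bder; lra).
  assert (EA : ex_derive (fun y => a t y) x) by (exists ap; auto).
  assert (EB : ex_derive (fun y => b t y) x) by (exists bp; auto).
  pose proof (is_derive_unique _ _ _ HA) as DA. pose proof (is_derive_unique _ _ _ HB) as DB.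
  split; [|split]; auto_derive; auto; replace (Derive (fun x0 : R => a t x0) x) with ap by (symmetry; apply is_derive_unique; exact HA); try replace (Derive (fun x0 : R => b t x0) x) with bp by (symmetry; apply is_derive_unique; exact HB); unfold A, B; ring.
Qed.

Lemma L_near t x : 0 < t < delta -> Rabs x < delta ->
  exists r0, 0 < r0 /\ forall y, Rabs (y - x) < r0 -> Rabs y < delta /\ Rabs (a t y - a t x) <= a t x / 4.
Proof.
  intros Ht Hx. destruct (L_reg t x Ht Hx) as [T1 [X1 [_ [P1 _]]]].
  assert (d2 : delta <= r) by (eapply Rle_trans; [apply Rmin_r| apply Rmin_l]).
  pose proof (Rabs_pos M01) as PM.
  exists (Rmin (delta - Rabs x) (a t x / (4 * (Rabs M01 + 1)))). split.
  { apply Rmin_pos; [lra| apply Rdiv_lt_0_compat; lra]. }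
  intros y Hy.
  assert (Hy1 : Rabs (y - x) < delta - Rabs x) by (eapply Rlt_le_trans; [exact Hy| apply Rmin_l]).
  assert (Hy2 : Rabs (y - x) < a t x / (4 * (Rabs M01 + 1))) by (eapply Rlt_le_trans; [exact Hy| apply Rmin_r]).
  assert (Hyd : Rabs y < delta) by (pose proof (Rabs_triang (y - x) x); replace (y - x + x) with y in H by ring; lra).
  split; auto.
  assert (seg : forall z, Rmin x y <= z <= Rmax x y -> Rabs z < delta).
  { intros z Hz. unfold Rmin, Rmax in Hz. destruct (Rabs_le_inv x (Rabs x) (Rle_refl _)).
    destruct (Rabs_le_inv y (Rabs y) (Rle_refl _)).
    destruct (Rle_dec x y); apply Rabs_def1; lra. }
  assert (B : Rabs (a t y - a t x) <= Rabs M01 * Rabs (y - x)).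
  { apply (mvt_bound (fun z => a t z) (fun z => Fa 0%nat 1%nat t z)).
    - intros z Hz. apply L_ader; [lra| pose proof (seg z Hz); lra].
    - intros z Hz. eapply Rle_trans; [apply HM01| apply Rle_abs]. apply L_dom; [lra| pose proof (seg z Hz); lra]. }
  eapply Rle_trans; [exact B|].
  apply Rle_trans with (Rabs M01 * (a t x / (4 * (Rabs M01 + 1)))).
  - apply Rmult_le_compat_l; lra.
  - apply (Rmult_le_reg_r (4 * (Rabs M01 + 1))); [lra|]. field_simplify; [|lra]. nra.
Qed.

Lemma L_factor l1 l2 l3 t y : EH l1 l2 l3 -> 0 < t < delta -> Rabs y < delta -> forall L,
  L^3 + (-(3 + 2 * a t y + a t y ^ 2)) * L^2 + (6*a t y + 2*a t y^2 + 2*a t y^3 - 9*b t y^2) * L + (-(4*a t y^3 - 27*b t y^2))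
  = (L - l1 t y) * (L - l2 t y) * (L - l3 t y).
Proof.
  intros H Ht Hy L. destruct (L_eig l1 l2 l3 t y H Ht Hy) as [E1 [E2 [E3 [Hl _]]]].
  rewrite <- pc_eq. apply pc_factor; auto.
Qed.

Lemma L_sfacts t x : 0 < t < delta -> Rabs x < delta ->
  let A := a t x in let s := sqrt A in
  0 < s <= 1/10 /\ A = s^2 /\ Rabs (Fa 0%nat 1%nat t x) <= Ka * s /\ Rabs (Fb 0%nat 1%nat t x) <= KB * s^2 /\
  Rabs (b t x) <= s^3.
Proof.
  intros Ht Hx A s. destruct (L_reg t x Ht Hx) as [T1 [X1 [_ [P1 [P2 [P3 _]]]]]].
  assert (As : A = s^2) by (unfold s; rewrite pow2_sqrt; unfold A; lra).
  assert (s0 : 0 < s) by (unfold s; apply sqrt_lt_R0; unfold A; lra).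
  split; [split; auto|]. 
  { unfold s. rewrite <- (sqrt_pow2 (1/10)) by lra. apply sqrt_le_1; unfold A; lra. }
  split; auto. split; [apply L_glaeser; auto|]. split.
  - rewrite <- As. apply L_bb; auto.
  - apply L_bsmall; auto.
Qed.

Lemma L_lder l1 l2 l3 t x : EH l1 l2 l3 -> 0 < t < delta -> Rabs x < delta ->
  let s := sqrt (a t x) in
  (ex_derive (fun y => l1 t y) x /\ Rabs (Derive (fun y => l1 t y) x) <= KL * s) /\
  (ex_derive (fun y => l2 t y) x /\ Rabs (Derive (fun y => l2 t y) x) <= KL * s) /\
  (ex_derive (fun y => l3 t y) x /\ Rabs (Derive (fun y => l3 t y) x) <= KL * s).
Proof.
  intros H Ht Hx s.
  destruct (L_reg t x Ht Hx) as [T1 [X1 [_ [P1 [P2 [P3 _]]]]]].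
  destruct (L_coef t x Ht Hx) as [C2 [C1 C0]].
  destruct (L_near t x Ht Hx) as [r0 [Hr0 Hnear]].
  destruct (L_eig l1 l2 l3 t x H Ht Hx) as [_ [_ [_ [_ [B1 [B2 B3]]]]]].
  destruct (L_sfacts t x Ht Hx) as [S1 [S2 [S3 [S4 S5]]]]. fold s in S1, S2, S3, S4, S5.
  pose proof Ka_pos. pose proof KB_pos.
  set (A := a t x) in *.
  assert (Gy : forall y, Rabs (y - x) < r0 -> (0 <= l1 t y < a t y / 2) /\ (a t y < l2 t y < 3 * a t y) /\ (2 < l3 t y < 4) /\ 3 * A / 4 <= a t y <= 5 * A / 4).
  { intros y Hy. destruct (Hnear y Hy) as [Hyd Ha].
    destruct (L_eig l1 l2 l3 t y H Ht Hyd) as [_ [_ [_ [_ [G1 [G2 G3]]]]]].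
    destruct (Rabs_le_inv _ _ Ha). repeat split; try lra. }
  assert (HgA : 0 < A / 4) by lra.
  unfold KL.
  split; [|split].
  - assert (D : is_derive (fun y => l1 t y) x (- numl A (Fa 0%nat 1%nat t x) (b t x) (Fb 0%nat 1%nat t x) (l1 t x) / ((l1 t x - l2 t x) * (l1 t x - l3 t x)))).
    { apply (root_deriv (fun y => -(3 + 2 * a t y + a t y ^ 2)) (fun y => 6*a t y + 2*a t y^2 + 2*a t y^3 - 9*b t y^2)
              (fun y => -(4*a t y^3 - 27*b t y^2)) (fun y => l1 t y) (fun y => l2 t y) (fun y => l3 t y) x r0 (A/4) _ _ _ Hr0 HgA C2 C1 C0).
      - intros y Hy L. destruct (Hnear y Hy) as [Hyd _]. apply L_factor; auto.
      - intros y Hy. destruct (Gy y Hy) as [G1 [G2 [G3 G4]]]. split.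
        + rewrite Rabs_left by lra. lra.
        + rewrite Rabs_left by lra. lra. }
    split; [eexists; exact D|]. erewrite (Derive_of _ x) by exact D.
    apply lder_small; auto.
    + rewrite Rabs_pos_eq; lra.
    + rewrite Rabs_left by lra. lra.
    + rewrite Rabs_left by lra. lra.
  - assert (D : is_derive (fun y => l2 t y) x (- numl A (Fa 0%nat 1%nat t x) (b t x) (Fb 0%nat 1%nat t x) (l2 t x) / ((l2 t x - l1 t x) * (l2 t x - l3 t x)))).
    { apply (root_deriv (fun y => -(3 + 2 * a t y + a t y ^ 2)) (fun y => 6*a t y + 2*a t y^2 + 2*a t y^3 - 9*b t y^2)
              (fun y => -(4*a t y^3 - 27*b t y^2)) (fun y => l2 t y) (fun y => l1 t y) (fun y => l3 t y) x r0 (A/4) _ _ _ Hr0 HgA C2 C1 C0).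
      - intros y Hy L. destruct (Hnear y Hy) as [Hyd _]. rewrite (L_factor l1 l2 l3 t y H Ht Hyd L). ring.
      - intros y Hy. destruct (Gy y Hy) as [G1 [G2 [G3 G4]]]. split.
        + rewrite Rabs_pos_eq by lra. lra.
        + rewrite Rabs_left by lra. lra. }
    split; [eexists; exact D|]. erewrite (Derive_of _ x) by exact D.
    apply lder_small; auto.
    + rewrite Rabs_pos_eq; lra.
    + rewrite Rabs_pos_eq by lra. lra.
    + rewrite Rabs_left by lra. lra.
  - assert (D : is_derive (fun y => l3 t y) x (- numl A (Fa 0%nat 1%nat t x) (b t x) (Fb 0%nat 1%nat t x) (l3 t x) / ((l3 t x - l1 t x) * (l3 t x - l2 t x)))).
    { apply (root_deriv (fun y => -(3 + 2 * a t y + a t y ^ 2)) (fun y => 6*a t y + 2*a t y^2 + 2*a t y^3 - 9*b t y^2)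
              (fun y => -(4*a t y^3 - 27*b t y^2)) (fun y => l3 t y) (fun y => l1 t y) (fun y => l2 t y) x r0 (A/4) _ _ _ Hr0 HgA C2 C1 C0).
      - intros y Hy L. destruct (Hnear y Hy) as [Hyd _]. rewrite (L_factor l1 l2 l3 t y H Ht Hyd L). ring.
      - intros y Hy. destruct (Gy y Hy) as [G1 [G2 [G3 G4]]]. split.
        + rewrite Rabs_pos_eq by lra. lra.
        + rewrite Rabs_pos_eq by lra. lra. }
    split; [eexists; exact D|]. erewrite (Derive_of _ x) by exact D.
    apply lder_big; auto.
    + rewrite Rabs_pos_eq; lra.
    + rewrite Rabs_pos_eq by lra. lra.
    + rewrite Rabs_pos_eq by lra. lra.
Qed.

Definition good (p : Idx) := EH (il1 p) (il2 p) (il3 p) /\ 0 < it p < delta /\ Rabs (ix p) < delta.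
Definition II := {p : Idx | good p}.
Definition XI (i : II) := ix (proj1_sig i).
Definition TI (i : II) := it (proj1_sig i).
Definition L1 (i : II) := il1 (proj1_sig i).
Definition L2 (i : II) := il2 (proj1_sig i).
Definition L3 (i : II) := il3 (proj1_sig i).
Definition sI (i : II) := sqrt (a (TI i) (XI i)).

Lemma good_i (i : II) : EH (L1 i) (L2 i) (L3 i) /\ 0 < TI i < delta /\ Rabs (XI i) < delta.
Proof. exact (proj2_sig i). Qed.

Lemma sI_bnd i : 0 < sI i <= 1.
Proof. destruct (good_i i) as [H [Ht Hx]]. destruct (L_sfacts _ _ Ht Hx) as [S1 _]. unfold sI. lra. Qed.

Lemma PPa : PP XI sI 2 (fun i y => a (TI i) y).
Proof.
  exists (1 + Ka). intros i. destruct (good_i i) as [H [Ht Hx]].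
  destruct (L_sfacts _ _ Ht Hx) as [S1 [S2 [S3 [S4 S5]]]]. fold (sI i) in *.
  destruct (L_reg _ _ Ht Hx) as [T1 [X1 [_ [P1 _]]]].
  assert (D : is_derive (fun y => a (TI i) y) (XI i) (Fa 0%nat 1%nat (TI i) (XI i))) by (apply L_ader; lra).
  pose proof Ka_pos. pose proof (pow_lt (sI i) 2 ltac:(lra)).
  split; [eexists; exact D|]. erewrite (Derive_of _ (XI i)) by exact D. split.
  - rewrite Rabs_pos_eq by lra. rewrite S2. nra.
  - apply Rle_trans with (sI i * (Ka * sI i)). apply Rmult_le_compat_l; lra. simpl. nra.
Qed.

Lemma PPb : PP XI sI 3 (fun i y => b (TI i) y).
Proof.
  exists (1 + KB). intros i. destruct (good_i i) as [H [Ht Hx]].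
  destruct (L_sfacts _ _ Ht Hx) as [S1 [S2 [S3 [S4 S5]]]]. fold (sI i) in *.
  destruct (L_reg _ _ Ht Hx) as [T1 [X1 [_ [P1 _]]]].
  assert (D : is_derive (fun y => b (TI i) y) (XI i) (Fb 0%nat 1%nat (TI i) (XI i))) by (apply L_bder; lra).
  pose proof KB_pos. pose proof (pow_lt (sI i) 3 ltac:(lra)).
  split; [eexists; exact D|]. erewrite (Derive_of _ (XI i)) by exact D. split.
  - nra.
  - apply Rle_trans with (sI i * (KB * sI i ^ 2)). apply Rmult_le_compat_l; lra. simpl. nra.
Qed.

Lemma PPl : PP XI sI 2 (fun i y => L1 i (TI i) y) /\ PP XI sI 2 (fun i y => L2 i (TI i) y) /\ PP XI sI 0 (fun i y => L3 i (TI i) y).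
Proof.
  pose proof KL_pos.
  split; [|split]; [exists (3 + KL)|exists (3 + KL)|exists (4 + KL)]; intros i; destruct (good_i i) as [HH [Ht Hx]];
  destruct (L_sfacts _ _ Ht Hx) as [S1 [S2 [S3 [S4 S5]]]]; fold (sI i) in *;
  destruct (L_eig _ _ _ _ _ HH Ht Hx) as [_ [_ [_ [_ [B1 [B2 B3]]]]]];
  destruct (L_lder _ _ _ _ _ HH Ht Hx) as [[E1 D1] [[E2 D2] [E3 D3]]]; fold (sI i) in *;
  pose proof (pow_lt (sI i) 2 ltac:(lra)); rewrite <- S2 in *.
  - split; auto. split.
    + rewrite Rabs_pos_eq by lra. nra.
    + apply Rle_trans with (sI i * (KL * sI i)). apply Rmult_le_compat_l; lra. rewrite S2. simpl. nra.
  - split; auto. split.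
    + rewrite Rabs_pos_eq by lra. nra.
    + apply Rle_trans with (sI i * (KL * sI i)). apply Rmult_le_compat_l; lra. rewrite S2. simpl. nra.
  - split; auto. split.
    + rewrite Rabs_pos_eq by lra. simpl. lra.
    + apply Rle_trans with (sI i * (KL * sI i)). apply Rmult_le_compat_l; lra. simpl.
      assert (sI i * sI i <= 1) by (apply Rle_trans with (sI i * 1); [apply Rmult_le_compat_l; lra| lra]).
      replace (sI i * (KL * sI i)) with (KL * (sI i * sI i)) by ring.
      assert (KL * (sI i * sI i) <= KL * 1) by (apply Rmult_le_compat_l; lra). lra.
Qed.

Ltac ppb := first [ exact PPa | exact PPb | exact (proj1 PPl) | exact (proj1 (proj2 PPl)) | exact (proj2 (proj2 PPl)) ].
Ltac ppall := repeat (first [ ppb | pp_step | apply sI_bnd ]).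
Ltac ppk := eapply (PP_weak XI sI sI_bnd); [| ppall]; simpl; lia.

Lemma PP_e10 : PP XI sI 4 (fun i y => a (TI i) y * (2 * a (TI i) y - L1 i (TI i) y)).
Proof. ppk. Unshelve. all: apply sI_bnd. Qed.

Lemma sqrt_lb cc s0 m G : 0 < cc -> 0 < s0 -> cc * s0 ^ (2 * m) <= G -> sqrt cc * s0 ^ m <= Rabs (sqrt G).
Proof.
  intros Hcc Hs H. rewrite Rabs_pos_eq by apply sqrt_pos.
  replace (s0 ^ (2 * m)) with ((s0 ^ m)^2) in H by (rewrite <- pow_mult; f_equal; lia).
  rewrite <- (sqrt_pow2 (s0 ^ m)) by (apply pow_le; lra). rewrite <- sqrt_mult by (try apply pow2_ge_0; lra).
  apply sqrt_le_1; [apply Rmult_le_pos; [lra| apply pow2_ge_0] | | auto].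
  eapply Rle_trans; [|exact H]. apply Rmult_le_pos; [lra| apply pow2_ge_0].
Qed.

Lemma sq_facts (i : II) :
  let T := TI i in let x := XI i in
  9 * sI i ^ (2 * 2) <= sq3 (ell1 (a T x) (b T x) (L1 i T x)) /\
  1 * sI i ^ (2 * 2) <= sq3 (ell2 (a T x) (b T x) (L2 i T x)) /\
  1 * sI i ^ (2 * 0) <= sq3 (ell3 (a T x) (b T x) (L3 i T x)).
Proof.
  intros T x. destruct (good_i i) as [H [Ht Hx]].
  destruct (L_eig _ _ _ _ _ H Ht Hx) as [_ [_ [_ [_ [B1 [B2 B3]]]]]].
  destruct (L_reg _ _ Ht Hx) as [_ [_ [_ [P1 [P2 [_ P3]]]]]].
  destruct (L_sfacts _ _ Ht Hx) as [S1 [S2 _]]. fold T x in S1, S2. unfold sI. fold T x.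
  replace (sqrt (a T x) ^ (2 * 2)) with ((sqrt (a T x) ^ 2) ^ 2) by (rewrite <- pow_mult; reflexivity).
  rewrite <- S2. simpl (_ ^ (2 * 0)). rewrite !Rmult_1_l.
  split; [|split].
  - apply sq1_lb; auto; lra.
  - apply sq2_lb; auto; lra.
  - apply sq3_lb; auto; lra.
Qed.


Lemma PP_q1 : PP XI sI (2 * 2) (fun i y => sq3 (ell1 (a (TI i) y) (b (TI i) y) (L1 i (TI i) y))).
Proof.
  apply (PP_ext_all XI sI _ (fun i y => (a (TI i) y * (2 * a (TI i) y - L1 i (TI i) y))^2 + (3 * b (TI i) y * (L1 i (TI i) y - 3))^2
     + ((L1 i (TI i) y - 3) * (L1 i (TI i) y - 2 * a (TI i) y))^2)); [intros; reflexivity|]. ppk. Unshelve. all: try apply sI_bnd.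
Qed.
Lemma PP_q2 : PP XI sI (2 * 2) (fun i y => sq3 (ell2 (a (TI i) y) (b (TI i) y) (L2 i (TI i) y))).
Proof.
  apply (PP_ext_all XI sI _ (fun i y => (-(3 * a (TI i) y * b (TI i) y))^2 + ((L2 i (TI i) y - 3) * (L2 i (TI i) y - a (TI i) y ^ 2) - a (TI i) y ^ 2)^2
     + (3 * b (TI i) y * (L2 i (TI i) y - 3))^2)); [intros; reflexivity|]. ppk. Unshelve. all: try apply sI_bnd.
Qed.
Lemma PP_q3 : PP XI sI (2 * 0) (fun i y => sq3 (ell3 (a (TI i) y) (b (TI i) y) (L3 i (TI i) y))).
Proof.
  apply (PP_ext_all XI sI _ (fun i y => ((L3 i (TI i) y - 2 * a (TI i) y) * (L3 i (TI i) y - a (TI i) y ^ 2) - 9 * b (TI i) y ^ 2)^2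
     + (-(3 * a (TI i) y * b (TI i) y))^2 + (-(a (TI i) y * (L3 i (TI i) y - 2 * a (TI i) y)))^2)); [intros; reflexivity|]. ppk. Unshelve. all: try apply sI_bnd.
Qed.
Lemma PP_n1 : PP XI sI 2 (fun i y => vnorm (ell1 (a (TI i) y) (b (TI i) y) (L1 i (TI i) y))).
Proof.
  apply (PP_ext_all XI sI _ (fun i y => sqrt (sq3 (ell1 (a (TI i) y) (b (TI i) y) (L1 i (TI i) y))))); [intros; reflexivity|].
  eapply (PP_sqrt XI sI sI_bnd 2 _ 9); [lra| exact PP_q1|].
  intros i. pose proof (sq_facts i) as F. simpl in F. simpl. tauto.
Qed.
Lemma LB_n1 : forall i, sqrt 9 * sI i ^ 2 <= Rabs (vnorm (ell1 (a (TI i) (XI i)) (b (TI i) (XI i)) (L1 i (TI i) (XI i)))).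
Proof.
  intros i. apply sqrt_lb; [lra| apply sI_bnd|]. pose proof (sq_facts i) as F. simpl in F. simpl. unfold sq3 in F. tauto.
Qed.

Lemma PP_T00 : PP XI sI 2 (fun i y => matT (a (TI i) y) (b (TI i) y) (L1 i (TI i) y) (L2 i (TI i) y) (L3 i (TI i) y) 0%nat 0%nat).
Proof.
  apply (PP_ext_all XI sI _ (fun i y => (a (TI i) y * (2 * a (TI i) y - L1 i (TI i) y)) / vnorm (ell1 (a (TI i) y) (b (TI i) y) (L1 i (TI i) y)))); [intros; reflexivity|].
  eapply (PP_div XI sI sI_bnd 2 2 _ _ (sqrt 9)); [apply sqrt_lt_R0; lra| | exact PP_n1 | exact LB_n1].
  ppk. Unshelve. all: try apply sI_bnd.
Qed.

Lemma PP_T10 : PP XI sI 1 (fun i y => matT (a (TI i) y) (b (TI i) y) (L1 i (TI i) y) (L2 i (TI i) y) (L3 i (TI i) y) 1%nat 0%nat).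
Proof.
  apply (PP_ext_all XI sI _ (fun i y => (3 * b (TI i) y * (L1 i (TI i) y - 3)) / vnorm (ell1 (a (TI i) y) (b (TI i) y) (L1 i (TI i) y)))); [intros; reflexivity|].
  eapply (PP_div XI sI sI_bnd 1 2 _ _ (sqrt 9)); [apply sqrt_lt_R0; lra| | exact PP_n1 | exact LB_n1].
  ppk. Unshelve. all: try apply sI_bnd.
Qed.

Lemma PP_T20 : PP XI sI 0 (fun i y => matT (a (TI i) y) (b (TI i) y) (L1 i (TI i) y) (L2 i (TI i) y) (L3 i (TI i) y) 2%nat 0%nat).
Proof.
  apply (PP_ext_all XI sI _ (fun i y => ((L1 i (TI i) y - 3) * (L1 i (TI i) y - 2 * a (TI i) y)) / vnorm (ell1 (a (TI i) y) (b (TI i) y) (L1 i (TI i) y)))); [intros; reflexivity|].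
  eapply (PP_div XI sI sI_bnd 0 2 _ _ (sqrt 9)); [apply sqrt_lt_R0; lra| | exact PP_n1 | exact LB_n1].
  ppk. Unshelve. all: try apply sI_bnd.
Qed.

Lemma PP_n2 : PP XI sI 2 (fun i y => vnorm (ell2 (a (TI i) y) (b (TI i) y) (L2 i (TI i) y))).
Proof.
  apply (PP_ext_all XI sI _ (fun i y => sqrt (sq3 (ell2 (a (TI i) y) (b (TI i) y) (L2 i (TI i) y))))); [intros; reflexivity|].
  eapply (PP_sqrt XI sI sI_bnd 2 _ 1); [lra| exact PP_q2|].
  intros i. pose proof (sq_facts i) as F. simpl in F. simpl. tauto.
Qed.
Lemma LB_n2 : forall i, sqrt 1 * sI i ^ 2 <= Rabs (vnorm (ell2 (a (TI i) (XI i)) (b (TI i) (XI i)) (L2 i (TI i) (XI i)))).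
Proof.
  intros i. apply sqrt_lb; [lra| apply sI_bnd|]. pose proof (sq_facts i) as F. simpl in F. simpl. unfold sq3 in F. tauto.
Qed.

Lemma PP_T01 : PP XI sI 3 (fun i y => matT (a (TI i) y) (b (TI i) y) (L1 i (TI i) y) (L2 i (TI i) y) (L3 i (TI i) y) 0%nat 1%nat).
Proof.
  apply (PP_ext_all XI sI _ (fun i y => (-(3 * a (TI i) y * b (TI i) y)) / vnorm (ell2 (a (TI i) y) (b (TI i) y) (L2 i (TI i) y)))); [intros; reflexivity|].
  eapply (PP_div XI sI sI_bnd 3 2 _ _ (sqrt 1)); [apply sqrt_lt_R0; lra| | exact PP_n2 | exact LB_n2].
  ppk. Unshelve. all: try apply sI_bnd.
Qed.

Lemma PP_T11 : PP XI sI 0 (fun i y => matT (a (TI i) y) (b (TI i) y) (L1 i (TI i) y) (L2 i (TI i) y) (L3 i (TI i) y) 1%nat 1%nat).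
Proof.
  apply (PP_ext_all XI sI _ (fun i y => ((L2 i (TI i) y - 3) * (L2 i (TI i) y - a (TI i) y ^ 2) - a (TI i) y ^ 2) / vnorm (ell2 (a (TI i) y) (b (TI i) y) (L2 i (TI i) y)))); [intros; reflexivity|].
  eapply (PP_div XI sI sI_bnd 0 2 _ _ (sqrt 1)); [apply sqrt_lt_R0; lra| | exact PP_n2 | exact LB_n2].
  ppk. Unshelve. all: try apply sI_bnd.
Qed.

Lemma PP_T21 : PP XI sI 1 (fun i y => matT (a (TI i) y) (b (TI i) y) (L1 i (TI i) y) (L2 i (TI i) y) (L3 i (TI i) y) 2%nat 1%nat).
Proof.
  apply (PP_ext_all XI sI _ (fun i y => (3 * b (TI i) y * (L2 i (TI i) y - 3)) / vnorm (ell2 (a (TI i) y) (b (TI i) y) (L2 i (TI i) y)))); [intros; reflexivity|].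
  eapply (PP_div XI sI sI_bnd 1 2 _ _ (sqrt 1)); [apply sqrt_lt_R0; lra| | exact PP_n2 | exact LB_n2].
  ppk. Unshelve. all: try apply sI_bnd.
Qed.

Lemma PP_n3 : PP XI sI 0 (fun i y => vnorm (ell3 (a (TI i) y) (b (TI i) y) (L3 i (TI i) y))).
Proof.
  apply (PP_ext_all XI sI _ (fun i y => sqrt (sq3 (ell3 (a (TI i) y) (b (TI i) y) (L3 i (TI i) y))))); [intros; reflexivity|].
  eapply (PP_sqrt XI sI sI_bnd 0 _ 1); [lra| exact PP_q3|].
  intros i. pose proof (sq_facts i) as F. simpl in F. simpl. tauto.
Qed.
Lemma LB_n3 : forall i, sqrt 1 * sI i ^ 0 <= Rabs (vnorm (ell3 (a (TI i) (XI i)) (b (TI i) (XI i)) (L3 i (TI i) (XI i)))).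
Proof.
  intros i. apply sqrt_lb; [lra| apply sI_bnd|]. pose proof (sq_facts i) as F. simpl in F. simpl. unfold sq3 in F. tauto.
Qed.

Lemma PP_T02 : PP XI sI 0 (fun i y => matT (a (TI i) y) (b (TI i) y) (L1 i (TI i) y) (L2 i (TI i) y) (L3 i (TI i) y) 0%nat 2%nat).
Proof.
  apply (PP_ext_all XI sI _ (fun i y => ((L3 i (TI i) y - 2 * a (TI i) y) * (L3 i (TI i) y - a (TI i) y ^ 2) - 9 * b (TI i) y ^ 2) / vnorm (ell3 (a (TI i) y) (b (TI i) y) (L3 i (TI i) y)))); [intros; reflexivity|].
  eapply (PP_div XI sI sI_bnd 0 0 _ _ (sqrt 1)); [apply sqrt_lt_R0; lra| | exact PP_n3 | exact LB_n3].
  ppk. Unshelve. all: try apply sI_bnd.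
Qed.

Lemma PP_T12 : PP XI sI 5 (fun i y => matT (a (TI i) y) (b (TI i) y) (L1 i (TI i) y) (L2 i (TI i) y) (L3 i (TI i) y) 1%nat 2%nat).
Proof.
  apply (PP_ext_all XI sI _ (fun i y => (-(3 * a (TI i) y * b (TI i) y)) / vnorm (ell3 (a (TI i) y) (b (TI i) y) (L3 i (TI i) y)))); [intros; reflexivity|].
  eapply (PP_div XI sI sI_bnd 5 0 _ _ (sqrt 1)); [apply sqrt_lt_R0; lra| | exact PP_n3 | exact LB_n3].
  ppk. Unshelve. all: try apply sI_bnd.
Qed.

Lemma PP_T22 : PP XI sI 2 (fun i y => matT (a (TI i) y) (b (TI i) y) (L1 i (TI i) y) (L2 i (TI i) y) (L3 i (TI i) y) 2%nat 2%nat).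
Proof.
  apply (PP_ext_all XI sI _ (fun i y => (-(a (TI i) y * (L3 i (TI i) y - 2 * a (TI i) y))) / vnorm (ell3 (a (TI i) y) (b (TI i) y) (L3 i (TI i) y)))); [intros; reflexivity|].
  eapply (PP_div XI sI sI_bnd 2 0 _ _ (sqrt 1)); [apply sqrt_lt_R0; lra| | exact PP_n3 | exact LB_n3].
  ppk. Unshelve. all: try apply sI_bnd.
Qed.

Lemma calA_loc (i : II) (ii jj : nat) : (ii < 3)%nat -> (jj < 3)%nat -> locally (XI i) (fun y =>
  let T := matT (a (TI i) y) (b (TI i) y) (L1 i (TI i) y) (L2 i (TI i) y) (L3 i (TI i) y) in
  T 0%nat ii * (a (TI i) y * T 1%nat jj + b (TI i) y * T 2%nat jj) + T 1%nat ii * T 0%nat jj + T 2%nat ii * T 1%nat jj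
  = calA (a (TI i) y) (b (TI i) y) (L1 i (TI i) y) (L2 i (TI i) y) (L3 i (TI i) y) ii jj).
Proof.
  intros Hii Hjj. destruct (good_i i) as [H [Ht Hx]].
  eapply loc_impl; [apply (loc_abs (XI i) delta Hx)|]. intros y Hy.
  destruct (L_eig _ _ _ _ _ H Ht Hy) as [E1 [E2 [E3 [Hl [B1 [B2 B3]]]]]].
  destruct (L_reg _ _ Ht Hy) as [_ [_ [_ [P1 [P2 [_ P3]]]]]].
  symmetry. apply calA_eq; auto.
  - assert (0 < 9 * a (TI i) y ^ 2) by (assert (0 < a (TI i) y ^ 2) by (apply pow_lt; lra); lra).
    assert (9 * a (TI i) y ^ 2 <= sq3 (ell1 (a (TI i) y) (b (TI i) y) (L1 i (TI i) y))) by (apply sq1_lb; auto; lra). lra.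
  - assert (0 < a (TI i) y ^ 2) by (apply pow_lt; lra).
    assert (a (TI i) y ^ 2 <= sq3 (ell2 (a (TI i) y) (b (TI i) y) (L2 i (TI i) y))) by (apply sq2_lb; auto; lra). lra.
  - assert (1 <= sq3 (ell3 (a (TI i) y) (b (TI i) y) (L3 i (TI i) y))) by (apply sq3_lb; auto; lra). lra.
Qed.

Ltac ppb2 := first [ ppb | exact PP_T00 | exact PP_T10 | exact PP_T20 | exact PP_T01 | exact PP_T11 | exact PP_T21
  | exact PP_T02 | exact PP_T12 | exact PP_T22 ].
Ltac ppall2 := repeat (first [ ppb2 | pp_step | apply sI_bnd ]).
Ltac ppk2 := eapply (PP_weak XI sI sI_bnd); [| ppall2]; simpl; lia.

Lemma PP_A00 : PP XI sI 1 (fun i y => calA (a (TI i) y) (b (TI i) y) (L1 i (TI i) y) (L2 i (TI i) y) (L3 i (TI i) y) 0%nat 0%nat).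
Proof.
  apply (PP_ext XI sI _ (fun i y => matT (a (TI i) y) (b (TI i) y) (L1 i (TI i) y) (L2 i (TI i) y) (L3 i (TI i) y) 0%nat 0%nat * (a (TI i) y * matT (a (TI i) y) (b (TI i) y) (L1 i (TI i) y) (L2 i (TI i) y) (L3 i (TI i) y) 1%nat 0%nat + b (TI i) y * matT (a (TI i) y) (b (TI i) y) (L1 i (TI i) y) (L2 i (TI i) y) (L3 i (TI i) y) 2%nat 0%nat) + matT (a (TI i) y) (b (TI i) y) (L1 i (TI i) y) (L2 i (TI i) y) (L3 i (TI i) y) 1%nat 0%nat * matT (a (TI i) y) (b (TI i) y) (L1 i (TI i) y) (L2 i (TI i) y) (L3 i (TI i) y) 0%nat 0%nat + matT (a (TI i) y) (b (TI i) y) (L1 i (TI i) y) (L2 i (TI i) y) (L3 i (TI i) y) 2%nat 0%nat * matT (a (TI i) y) (b (TI i) y) (L1 i (TI i) y) (L2 i (TI i) y) (L3 i (TI i) y) 1%nat 0%nat)); [intros i; apply (calA_loc i 0 0); lia|].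
  ppk2. Unshelve. all: try apply sI_bnd.
Qed.

Lemma PP_A01 : PP XI sI 0 (fun i y => calA (a (TI i) y) (b (TI i) y) (L1 i (TI i) y) (L2 i (TI i) y) (L3 i (TI i) y) 0%nat 1%nat).
Proof.
  apply (PP_ext XI sI _ (fun i y => matT (a (TI i) y) (b (TI i) y) (L1 i (TI i) y) (L2 i (TI i) y) (L3 i (TI i) y) 0%nat 0%nat * (a (TI i) y * matT (a (TI i) y) (b (TI i) y) (L1 i (TI i) y) (L2 i (TI i) y) (L3 i (TI i) y) 1%nat 1%nat + b (TI i) y * matT (a (TI i) y) (b (TI i) y) (L1 i (TI i) y) (L2 i (TI i) y) (L3 i (TI i) y) 2%nat 1%nat) + matT (a (TI i) y) (b (TI i) y) (L1 i (TI i) y) (L2 i (TI i) y) (L3 i (TI i) y) 1%nat 0%nat * matT (a (TI i) y) (b (TI i) y) (L1 i (TI i) y) (L2 i (TI i) y) (L3 i (TI i) y) 0%nat 1%nat + matT (a (TI i) y) (b (TI i) y) (L1 i (TI i) y) (L2 i (TI i) y) (L3 i (TI i) y) 2%nat 0%nat * matT (a (TI i) y) (b (TI i) y) (L1 i (TI i) y) (L2 i (TI i) y) (L3 i (TI i) y) 1%nat 1%nat)); [intros i; apply (calA_loc i 0 1); lia|].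
  ppk2. Unshelve. all: try apply sI_bnd.
Qed.

Lemma PP_A02 : PP XI sI 1 (fun i y => calA (a (TI i) y) (b (TI i) y) (L1 i (TI i) y) (L2 i (TI i) y) (L3 i (TI i) y) 0%nat 2%nat).
Proof.
  apply (PP_ext XI sI _ (fun i y => matT (a (TI i) y) (b (TI i) y) (L1 i (TI i) y) (L2 i (TI i) y) (L3 i (TI i) y) 0%nat 0%nat * (a (TI i) y * matT (a (TI i) y) (b (TI i) y) (L1 i (TI i) y) (L2 i (TI i) y) (L3 i (TI i) y) 1%nat 2%nat + b (TI i) y * matT (a (TI i) y) (b (TI i) y) (L1 i (TI i) y) (L2 i (TI i) y) (L3 i (TI i) y) 2%nat 2%nat) + matT (a (TI i) y) (b (TI i) y) (L1 i (TI i) y) (L2 i (TI i) y) (L3 i (TI i) y) 1%nat 0%nat * matT (a (TI i) y) (b (TI i) y) (L1 i (TI i) y) (L2 i (TI i) y) (L3 i (TI i) y) 0%nat 2%nat + matT (a (TI i) y) (b (TI i) y) (L1 i (TI i) y) (L2 i (TI i) y) (L3 i (TI i) y) 2%nat 0%nat * matT (a (TI i) y) (b (TI i) y) (L1 i (TI i) y) (L2 i (TI i) y) (L3 i (TI i) y) 1%nat 2%nat)); [intros i; apply (calA_loc i 0 2); lia|].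
  ppk2. Unshelve. all: try apply sI_bnd.
Qed.

Lemma PP_A10 : PP XI sI 2 (fun i y => calA (a (TI i) y) (b (TI i) y) (L1 i (TI i) y) (L2 i (TI i) y) (L3 i (TI i) y) 1%nat 0%nat).
Proof.
  apply (PP_ext XI sI _ (fun i y => matT (a (TI i) y) (b (TI i) y) (L1 i (TI i) y) (L2 i (TI i) y) (L3 i (TI i) y) 0%nat 1%nat * (a (TI i) y * matT (a (TI i) y) (b (TI i) y) (L1 i (TI i) y) (L2 i (TI i) y) (L3 i (TI i) y) 1%nat 0%nat + b (TI i) y * matT (a (TI i) y) (b (TI i) y) (L1 i (TI i) y) (L2 i (TI i) y) (L3 i (TI i) y) 2%nat 0%nat) + matT (a (TI i) y) (b (TI i) y) (L1 i (TI i) y) (L2 i (TI i) y) (L3 i (TI i) y) 1%nat 1%nat * matT (a (TI i) y) (b (TI i) y) (L1 i (TI i) y) (L2 i (TI i) y) (L3 i (TI i) y) 0%nat 0%nat + matT (a (TI i) y) (b (TI i) y) (L1 i (TI i) y) (L2 i (TI i) y) (L3 i (TI i) y) 2%nat 1%nat * matT (a (TI i) y) (b (TI i) y) (L1 i (TI i) y) (L2 i (TI i) y) (L3 i (TI i) y) 1%nat 0%nat)); [intros i; apply (calA_loc i 1 0); lia|].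
  ppk2. Unshelve. all: try apply sI_bnd.
Qed.

Lemma PP_A11 : PP XI sI 1 (fun i y => calA (a (TI i) y) (b (TI i) y) (L1 i (TI i) y) (L2 i (TI i) y) (L3 i (TI i) y) 1%nat 1%nat).
Proof.
  apply (PP_ext XI sI _ (fun i y => matT (a (TI i) y) (b (TI i) y) (L1 i (TI i) y) (L2 i (TI i) y) (L3 i (TI i) y) 0%nat 1%nat * (a (TI i) y * matT (a (TI i) y) (b (TI i) y) (L1 i (TI i) y) (L2 i (TI i) y) (L3 i (TI i) y) 1%nat 1%nat + b (TI i) y * matT (a (TI i) y) (b (TI i) y) (L1 i (TI i) y) (L2 i (TI i) y) (L3 i (TI i) y) 2%nat 1%nat) + matT (a (TI i) y) (b (TI i) y) (L1 i (TI i) y) (L2 i (TI i) y) (L3 i (TI i) y) 1%nat 1%nat * matT (a (TI i) y) (b (TI i) y) (L1 i (TI i) y) (L2 i (TI i) y) (L3 i (TI i) y) 0%nat 1%nat + matT (a (TI i) y) (b (TI i) y) (L1 i (TI i) y) (L2 i (TI i) y) (L3 i (TI i) y) 2%nat 1%nat * matT (a (TI i) y) (b (TI i) y) (L1 i (TI i) y) (L2 i (TI i) y) (L3 i (TI i) y) 1%nat 1%nat)); [intros i; apply (calA_loc i 1 1); lia|].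
  ppk2. Unshelve. all: try apply sI_bnd.
Qed.

Lemma PP_A12 : PP XI sI 0 (fun i y => calA (a (TI i) y) (b (TI i) y) (L1 i (TI i) y) (L2 i (TI i) y) (L3 i (TI i) y) 1%nat 2%nat).
Proof.
  apply (PP_ext XI sI _ (fun i y => matT (a (TI i) y) (b (TI i) y) (L1 i (TI i) y) (L2 i (TI i) y) (L3 i (TI i) y) 0%nat 1%nat * (a (TI i) y * matT (a (TI i) y) (b (TI i) y) (L1 i (TI i) y) (L2 i (TI i) y) (L3 i (TI i) y) 1%nat 2%nat + b (TI i) y * matT (a (TI i) y) (b (TI i) y) (L1 i (TI i) y) (L2 i (TI i) y) (L3 i (TI i) y) 2%nat 2%nat) + matT (a (TI i) y) (b (TI i) y) (L1 i (TI i) y) (L2 i (TI i) y) (L3 i (TI i) y) 1%nat 1%nat * matT (a (TI i) y) (b (TI i) y) (L1 i (TI i) y) (L2 i (TI i) y) (L3 i (TI i) y) 0%nat 2%nat + matT (a (TI i) y) (b (TI i) y) (L1 i (TI i) y) (L2 i (TI i) y) (L3 i (TI i) y) 2%nat 1%nat * matT (a (TI i) y) (b (TI i) y) (L1 i (TI i) y) (L2 i (TI i) y) (L3 i (TI i) y) 1%nat 2%nat)); [intros i; apply (calA_loc i 1 2); lia|].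
  ppk2. Unshelve. all: try apply sI_bnd.
Qed.

Lemma PP_A20 : PP XI sI 3 (fun i y => calA (a (TI i) y) (b (TI i) y) (L1 i (TI i) y) (L2 i (TI i) y) (L3 i (TI i) y) 2%nat 0%nat).
Proof.
  apply (PP_ext XI sI _ (fun i y => matT (a (TI i) y) (b (TI i) y) (L1 i (TI i) y) (L2 i (TI i) y) (L3 i (TI i) y) 0%nat 2%nat * (a (TI i) y * matT (a (TI i) y) (b (TI i) y) (L1 i (TI i) y) (L2 i (TI i) y) (L3 i (TI i) y) 1%nat 0%nat + b (TI i) y * matT (a (TI i) y) (b (TI i) y) (L1 i (TI i) y) (L2 i (TI i) y) (L3 i (TI i) y) 2%nat 0%nat) + matT (a (TI i) y) (b (TI i) y) (L1 i (TI i) y) (L2 i (TI i) y) (L3 i (TI i) y) 1%nat 2%nat * matT (a (TI i) y) (b (TI i) y) (L1 i (TI i) y) (L2 i (TI i) y) (L3 i (TI i) y) 0%nat 0%nat + matT (a (TI i) y) (b (TI i) y) (L1 i (TI i) y) (L2 i (TI i) y) (L3 i (TI i) y) 2%nat 2%nat * matT (a (TI i) y) (b (TI i) y) (L1 i (TI i) y) (L2 i (TI i) y) (L3 i (TI i) y) 1%nat 0%nat)); [intros i; apply (calA_loc i 2 0); lia|].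
  ppk2. Unshelve. all: try apply sI_bnd.
Qed.

Lemma PP_A21 : PP XI sI 2 (fun i y => calA (a (TI i) y) (b (TI i) y) (L1 i (TI i) y) (L2 i (TI i) y) (L3 i (TI i) y) 2%nat 1%nat).
Proof.
  apply (PP_ext XI sI _ (fun i y => matT (a (TI i) y) (b (TI i) y) (L1 i (TI i) y) (L2 i (TI i) y) (L3 i (TI i) y) 0%nat 2%nat * (a (TI i) y * matT (a (TI i) y) (b (TI i) y) (L1 i (TI i) y) (L2 i (TI i) y) (L3 i (TI i) y) 1%nat 1%nat + b (TI i) y * matT (a (TI i) y) (b (TI i) y) (L1 i (TI i) y) (L2 i (TI i) y) (L3 i (TI i) y) 2%nat 1%nat) + matT (a (TI i) y) (b (TI i) y) (L1 i (TI i) y) (L2 i (TI i) y) (L3 i (TI i) y) 1%nat 2%nat * matT (a (TI i) y) (b (TI i) y) (L1 i (TI i) y) (L2 i (TI i) y) (L3 i (TI i) y) 0%nat 1%nat + matT (a (TI i) y) (b (TI i) y) (L1 i (TI i) y) (L2 i (TI i) y) (L3 i (TI i) y) 2%nat 2%nat * matT (a (TI i) y) (b (TI i) y) (L1 i (TI i) y) (L2 i (TI i) y) (L3 i (TI i) y) 1%nat 1%nat)); [intros i; apply (calA_loc i 2 1); lia|].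
  ppk2. Unshelve. all: try apply sI_bnd.
Qed.

Lemma PP_A22 : PP XI sI 5 (fun i y => calA (a (TI i) y) (b (TI i) y) (L1 i (TI i) y) (L2 i (TI i) y) (L3 i (TI i) y) 2%nat 2%nat).
Proof.
  apply (PP_ext XI sI _ (fun i y => matT (a (TI i) y) (b (TI i) y) (L1 i (TI i) y) (L2 i (TI i) y) (L3 i (TI i) y) 0%nat 2%nat * (a (TI i) y * matT (a (TI i) y) (b (TI i) y) (L1 i (TI i) y) (L2 i (TI i) y) (L3 i (TI i) y) 1%nat 2%nat + b (TI i) y * matT (a (TI i) y) (b (TI i) y) (L1 i (TI i) y) (L2 i (TI i) y) (L3 i (TI i) y) 2%nat 2%nat) + matT (a (TI i) y) (b (TI i) y) (L1 i (TI i) y) (L2 i (TI i) y) (L3 i (TI i) y) 1%nat 2%nat * matT (a (TI i) y) (b (TI i) y) (L1 i (TI i) y) (L2 i (TI i) y) (L3 i (TI i) y) 0%nat 2%nat + matT (a (TI i) y) (b (TI i) y) (L1 i (TI i) y) (L2 i (TI i) y) (L3 i (TI i) y) 2%nat 2%nat * matT (a (TI i) y) (b (TI i) y) (L1 i (TI i) y) (L2 i (TI i) y) (L3 i (TI i) y) 1%nat 2%nat)); [intros i; apply (calA_loc i 2 2); lia|].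
  ppk2. Unshelve. all: try apply sI_bnd.
Qed.


Lemma fin_bd k (s v D K C g dg : R) : 0 < s <= 1 -> 0 <= K <= C -> Rabs v <= K * s ^ k -> s * Rabs D <= K * s ^ k ->
  s ^ k <= g -> s ^ k <= s * dg -> Rabs v <= C * g /\ Rabs D <= C * dg.
Proof.
  intros Hs HK Hv HD0 Hg Hdg. pose proof (pow_lt s k ltac:(lra)) as P.
  split.
  - eapply Rle_trans; [exact Hv|]. apply Rmult_le_compat; lra.
  - assert (s * Rabs D <= s * (C * dg)).
    { eapply Rle_trans; [exact HD0|]. apply Rle_trans with (K * (s * dg)); [apply Rmult_le_compat_l; lra|].
      replace (s * (C * dg)) with (C * (s * dg)) by ring. apply Rmult_le_compat_r; lra. }
    apply (Rmult_le_reg_l s); lra.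
Qed.

Ltac g22 s := 
  match goal with Hs : 0 < s <= 1 |- _ =>
    assert (s * s * s <= 1) by (apply Rle_trans with (1*1*1); [apply Rmult_le_compat; [nra|lra|apply Rmult_le_compat; lra|lra] | lra]);
    replace (s * (s * (s * (s * (s * 1))))) with ((s*s) * (s*s*s)) by ring;
    assert (0 < s * s) by nra;
    apply Rle_trans with ((s * s) * 1); [apply Rmult_le_compat_l; lra| lra] end.
Ltac gside s As := unfold gaugeA, gaugedA, mk3; simpl; fold s; rewrite ?As;
  first [ lra | (rewrite Rinv_r by lra; lra) | (apply Req_le; ring) | g22 s ].

Lemma final_main : exists delta C, 0 < delta /\ 0 < C /\
    (forall t x, 0 < t < delta -> Rabs x < delta ->
       exists m1 m2 m3, m1 < m2 < m3 /\
         is_eigenvalue (matS (a t x) (b t x)) m1 /\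
         is_eigenvalue (matS (a t x) (b t x)) m2 /\
         is_eigenvalue (matS (a t x) (b t x)) m3) /\
    (forall l1 l2 l3 : R -> R -> R,
       (forall t x, 0 < t < delta -> Rabs x < delta ->
          l1 t x < l2 t x < l3 t x /\
          is_eigenvalue (matS (a t x) (b t x)) (l1 t x) /\
          is_eigenvalue (matS (a t x) (b t x)) (l2 t x) /\
          is_eigenvalue (matS (a t x) (b t x)) (l3 t x)) ->
       forall t x, 0 < t < delta -> Rabs x < delta ->
       forall i j : nat, (i < 3)%nat -> (j < 3)%nat ->
         Rabs (calA (a t x) (b t x) (l1 t x) (l2 t x) (l3 t x) i j)
           <= C * gaugeA (a t x) i j /\
         ex_derive (fun y => calA (a t y) (b t y) (l1 t y) (l2 t y) (l3 t y) i j) x /\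
         Rabs (Derive (fun y => calA (a t y) (b t y) (l1 t y) (l2 t y) (l3 t y) i j) x)
           <= C * gaugedA (a t x) i j).
Proof.
  destruct (PP_K_nonneg XI sI sI_bnd _ _ PP_A00) as [K00 [K00p H00]].
  destruct (PP_K_nonneg XI sI sI_bnd _ _ PP_A01) as [K01 [K01p H01]].
  destruct (PP_K_nonneg XI sI sI_bnd _ _ PP_A02) as [K02 [K02p H02]].
  destruct (PP_K_nonneg XI sI sI_bnd _ _ PP_A10) as [K10 [K10p H10]].
  destruct (PP_K_nonneg XI sI sI_bnd _ _ PP_A11) as [K11 [K11p H11]].
  destruct (PP_K_nonneg XI sI sI_bnd _ _ PP_A12) as [K12 [K12p H12]].
  destruct (PP_K_nonneg XI sI sI_bnd _ _ PP_A20) as [K20 [K20p H20]].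
  destruct (PP_K_nonneg XI sI sI_bnd _ _ PP_A21) as [K21 [K21p H21]].
  destruct (PP_K_nonneg XI sI sI_bnd _ _ PP_A22) as [K22 [K22p H22]].
  set (C := K00 + K01 + K02 + K10 + K11 + K12 + K20 + K21 + K22 + 1).
  exists delta, C. split; [apply delta_pos|]. split; [unfold C; lra|]. split.
  - intros t x Ht Hx. destruct (L_reg t x Ht Hx) as [_ [_ [_ [P1 [P2 [_ P3]]]]]].
    destruct (eig_exist (a t x) (b t x) ltac:(lra) P3) as [r1 [r2 [r3 [R1 [R2 [R3 [e1 [e2 e3]]]]]]]].
    exists r1, r2, r3. split; [lra|]. split; [|split].
    + apply eigv_of with (ell1 (a t x) (b t x) r1); [apply sq_nz | intro k; apply ell1_eig; auto].
      assert (0 < 9 * a t x ^ 2) by (assert (0 < a t x ^ 2) by (apply pow_lt; lra); lra).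
      assert (9 * a t x ^ 2 <= sq3 (ell1 (a t x) (b t x) r1)) by (apply sq1_lb; auto; lra). lra.
    + apply eigv_of with (ell2 (a t x) (b t x) r2); [apply sq_nz | intro k; apply ell2_eig; auto].
      assert (0 < a t x ^ 2) by (apply pow_lt; lra).
      assert (a t x ^ 2 <= sq3 (ell2 (a t x) (b t x) r2)) by (apply sq2_lb; auto; lra). lra.
    + apply eigv_of with (ell3 (a t x) (b t x) r3); [apply sq_nz | intro k; apply ell3_eig; auto].
      assert (1 <= sq3 (ell3 (a t x) (b t x) r3)) by (apply sq3_lb; auto; lra). lra.
  - intros l1 l2 l3 Hl t x Ht Hx i j Hi Hj.
    set (idx := exist good (mkIdx l1 l2 l3 t x) (conj Hl (conj Ht Hx)) : II).
    pose proof (sI_bnd idx) as Hs. unfold sI in Hs. simpl in Hs.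
    destruct (L_sfacts t x Ht Hx) as [_ [As _]].
    set (s := sqrt (a t x)) in *.
    assert (Hs' : 0 < s <= 1) by exact Hs. clear Hs. rename Hs' into Hs.
    destruct i as [|[|[|i]]]; [| | |lia]; destruct j as [|[|[|j]]]; try lia.
    + destruct (H00 idx) as [E [V W]].
      edestruct (fin_bd 1 s (calA (a t x) (b t x) (l1 t x) (l2 t x) (l3 t x) 0%nat 0%nat) (Derive (fun y => calA (a t y) (b t y) (l1 t y) (l2 t y) (l3 t y) 0%nat 0%nat) x) K00 C (gaugeA (a t x) 0%nat 0%nat) (gaugedA (a t x) 0%nat 0%nat)) as [F1 F2];
        [exact Hs | split; [exact K00p| unfold C; lra] | exact V | exact W | gside s As | gside s As | exact (conj F1 (conj E F2))].
    + destruct (H01 idx) as [E [V W]].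
      edestruct (fin_bd 0 s (calA (a t x) (b t x) (l1 t x) (l2 t x) (l3 t x) 0%nat 1%nat) (Derive (fun y => calA (a t y) (b t y) (l1 t y) (l2 t y) (l3 t y) 0%nat 1%nat) x) K01 C (gaugeA (a t x) 0%nat 1%nat) (gaugedA (a t x) 0%nat 1%nat)) as [F1 F2];
        [exact Hs | split; [exact K01p| unfold C; lra] | exact V | exact W | gside s As | gside s As | exact (conj F1 (conj E F2))].
    + destruct (H02 idx) as [E [V W]].
      edestruct (fin_bd 1 s (calA (a t x) (b t x) (l1 t x) (l2 t x) (l3 t x) 0%nat 2%nat) (Derive (fun y => calA (a t y) (b t y) (l1 t y) (l2 t y) (l3 t y) 0%nat 2%nat) x) K02 C (gaugeA (a t x) 0%nat 2%nat) (gaugedA (a t x) 0%nat 2%nat)) as [F1 F2];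
        [exact Hs | split; [exact K02p| unfold C; lra] | exact V | exact W | gside s As | gside s As | exact (conj F1 (conj E F2))].
    + destruct (H10 idx) as [E [V W]].
      edestruct (fin_bd 2 s (calA (a t x) (b t x) (l1 t x) (l2 t x) (l3 t x) 1%nat 0%nat) (Derive (fun y => calA (a t y) (b t y) (l1 t y) (l2 t y) (l3 t y) 1%nat 0%nat) x) K10 C (gaugeA (a t x) 1%nat 0%nat) (gaugedA (a t x) 1%nat 0%nat)) as [F1 F2];
        [exact Hs | split; [exact K10p| unfold C; lra] | exact V | exact W | gside s As | gside s As | exact (conj F1 (conj E F2))].
    + destruct (H11 idx) as [E [V W]].
      edestruct (fin_bd 1 s (calA (a t x) (b t x) (l1 t x) (l2 t x) (l3 t x) 1%nat 1%nat) (Derive (fun y => calA (a t y) (b t y) (l1 t y) (l2 t y) (l3 t y) 1%nat 1%nat) x) K11 C (gaugeA (a t x) 1%nat 1%nat) (gaugedA (a t x) 1%nat 1%nat)) as [F1 F2];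
        [exact Hs | split; [exact K11p| unfold C; lra] | exact V | exact W | gside s As | gside s As | exact (conj F1 (conj E F2))].
    + destruct (H12 idx) as [E [V W]].
      edestruct (fin_bd 0 s (calA (a t x) (b t x) (l1 t x) (l2 t x) (l3 t x) 1%nat 2%nat) (Derive (fun y => calA (a t y) (b t y) (l1 t y) (l2 t y) (l3 t y) 1%nat 2%nat) x) K12 C (gaugeA (a t x) 1%nat 2%nat) (gaugedA (a t x) 1%nat 2%nat)) as [F1 F2];
        [exact Hs | split; [exact K12p| unfold C; lra] | exact V | exact W | gside s As | gside s As | exact (conj F1 (conj E F2))].
    + destruct (H20 idx) as [E [V W]].
      edestruct (fin_bd 3 s (calA (a t x) (b t x) (l1 t x) (l2 t x) (l3 t x) 2%nat 0%nat) (Derive (fun y => calA (a t y) (b t y) (l1 t y) (l2 t y) (l3 t y) 2%nat 0%nat) x) K20 C (gaugeA (a t x) 2%nat 0%nat) (gaugedA (a t x) 2%nat 0%nat)) as [F1 F2];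
        [exact Hs | split; [exact K20p| unfold C; lra] | exact V | exact W | gside s As | gside s As | exact (conj F1 (conj E F2))].
    + destruct (H21 idx) as [E [V W]].
      edestruct (fin_bd 2 s (calA (a t x) (b t x) (l1 t x) (l2 t x) (l3 t x) 2%nat 1%nat) (Derive (fun y => calA (a t y) (b t y) (l1 t y) (l2 t y) (l3 t y) 2%nat 1%nat) x) K21 C (gaugeA (a t x) 2%nat 1%nat) (gaugedA (a t x) 2%nat 1%nat)) as [F1 F2];
        [exact Hs | split; [exact K21p| unfold C; lra] | exact V | exact W | gside s As | gside s As | exact (conj F1 (conj E F2))].
    + destruct (H22 idx) as [E [V W]].
      edestruct (fin_bd 5 s (calA (a t x) (b t x) (l1 t x) (l2 t x) (l3 t x) 2%nat 2%nat) (Derive (fun y => calA (a t y) (b t y) (l1 t y) (l2 t y) (l3 t y) 2%nat 2%nat) x) K22 C (gaugeA (a t x) 2%nat 2%nat) (gaugedA (a t x) 2%nat 2%nat)) as [F1 F2];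
        [exact Hs | split; [exact K22p| unfold C; lra] | exact V | exact W | gside s As | gside s As | exact (conj F1 (conj E F2))].
Qed.
End Main1.

Theorem lemma3p2 (a b : R -> R -> R) (c Tt : R) (w1 w2 : Rbar) :
  0 < c -> 0 < Tt -> Rbar_lt w1 0 -> Rbar_lt 0 w2 ->
  smooth_bdd (fun t x => -c < t < Tt /\ Rbar_lt w1 x /\ Rbar_lt x w2) a ->
  smooth_bdd (fun t x => -c < t < Tt /\ Rbar_lt w1 x /\ Rbar_lt x w2) b ->
  (forall t x : R, 0 <= t < Tt -> Rbar_lt w1 x -> Rbar_lt x w2 ->
     0 <= 4 * a t x ^ 3 - 27 * b t x ^ 2) ->
  a 0 0 = 0 ->
  (forall t x : R, 0 < t < Tt -> Rbar_lt w1 x -> Rbar_lt x w2 -> 0 < a t x) ->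
  exists delta C : R, 0 < delta /\ 0 < C /\
    (* on U /\ {t>0}, U = (-delta,delta)^2, S has three distinct eigenvalues *)
    (forall t x, 0 < t < delta -> Rabs x < delta ->
       exists m1 m2 m3, m1 < m2 < m3 /\
         is_eigenvalue (matS (a t x) (b t x)) m1 /\
         is_eigenvalue (matS (a t x) (b t x)) m2 /\
         is_eigenvalue (matS (a t x) (b t x)) m3) /\
    (* for the ordered eigenvalues lambda_1 < lambda_2 < lambda_3 on U /\ {t>0} *)
    (forall l1 l2 l3 : R -> R -> R,
       (forall t x, 0 < t < delta -> Rabs x < delta ->
          l1 t x < l2 t x < l3 t x /\
          is_eigenvalue (matS (a t x) (b t x)) (l1 t x) /\
          is_eigenvalue (matS (a t x) (b t x)) (l2 t x) /\
          is_eigenvalue (matS (a t x) (b t x)) (l3 t x)) ->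
       forall t x, 0 < t < delta -> Rabs x < delta ->
       forall i j : nat, (i < 3)%nat -> (j < 3)%nat ->
         Rabs (calA (a t x) (b t x) (l1 t x) (l2 t x) (l3 t x) i j)
           <= C * gaugeA (a t x) i j /\
         ex_derive (fun y => calA (a t y) (b t y) (l1 t y) (l2 t y) (l3 t y) i j) x /\
         Rabs (Derive (fun y => calA (a t y) (b t y) (l1 t y) (l2 t y) (l3 t y) i j) x)
           <= C * gaugedA (a t x) i j).
Proof.
  intros Hc HT Hw1 Hw2 Sa Sb HD Ha00 Hpos.
  destruct Sa as [Fa [Fa0 [Fad Fab]]]. destruct Sb as [Fb [Fb0 [Fbd Fbb]]].
  destruct (Fab 0%nat 1%nat) as [M01 HM01]. destruct (Fab 0%nat 2%nat) as [M02 HM02].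
  destruct (Fab 1%nat 0%nat) as [M10 HM10]. destruct (Fbb 0%nat 3%nat) as [N03 HN03].
  destruct (rbar_rad w1 w2 Hw1 Hw2) as [r [Hr Hrw]].
  exact (final_main a b c Tt w1 w2 Fa Fb r M01 M02 M10 N03 Hc HT Fa0 Fad Fb0 Fbd Hr Hrw HM01 HM02 HM10 HN03 HD Ha00 Hpos).
Qed.
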